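(* Let $a\in\mathbb{R}$, $b\in(a,\infty)$, $h\in\mathbb{N}$, $v_1,\dots,v_h,w_1,\dots,w_h\in(0,\infty)$, and let $f,p\in C(\mathbb{R},\mathbb{R})$ satisfy for all $x\in\mathbb{R}$ that $p(x)\ge0$ and $p^{-1}((0,\infty))=(a,b)$; with $\mathcal{N}^\theta$, $\mathcal{L}$, $I_i^\theta$, $\psi_i$, $\operatorname{Lip}$ as in the context. Assume that $f$ is non-decreasing and satisfies $\operatorname{Lip}(f)<\min_{i\in\{1,\dots,h\}}v_iw_i$, let $\Theta\in C([0,\infty),\mathbb{R}^{h+1})$ satisfy for all $t\in[0,\infty)$ that $\Theta_t=\Theta_0-\int_0^t(\nabla\mathcal{L})(\Theta_s)\,\mathrm{d}s$, let $\vartheta\in\mathbb{R}^{h+1}$ satisfy $\limsup_{t\to\infty}\|\Theta_t-\vartheta\|=0$, let $V=\sup_{x\in(a,b)}\sum_{i\in\{1,\dots,h\},\,x\in I_i^\vartheta}v_i$, assume $$V<\Big[\int_a^bp(x)\,\mathrm{d}x\Big]^{-1}\min\Big\{\int_a^b(f(b)-f(x))p(x)\,\mathrm{d}x,\int_a^b(f(x)-f(a))p(x)\,\mathrm{d}x\Big\},$$ and assume $\sum_{i=1}^hv_i\mathbb{1}_{(a-[w_i]^{-1},b)}(\psi_i(\Theta_0))>f(b)-f(a)+4V$. Then $$\mathcal{L}(\vartheta)\le\big(2V^2+(f(b)-f(a))V\big)\int_a^bp(x)\,\mathrm{d}x.$$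
   Context: Let $\mathfrak{c}(x)=\min\{\max\{x,0\},1\}$ (clipping function). For $F\in C(\mathbb{R},\mathbb{R})$ let $\operatorname{Lip}(F)=\sup_{x,y\in[a,b],x\neq y}\frac{|F(x)-F(y)|}{|x-y|}$. For $\theta=(\theta_1,\dots,\theta_{h+1})\in\mathbb{R}^{h+1}$ and $i\in\{1,\dots,h\}$ let $\psi_i(\theta)=-[w_i]^{-1}\theta_i$, let $I_i^\theta=(\psi_i(\theta),\psi_i(\theta)+[w_i]^{-1})\cap(a,b)$, let $\mathcal{N}^\theta(x)=\theta_{h+1}+\sum_{i=1}^hv_i\mathfrak{c}(w_ix+\theta_i)$ for $x\in\mathbb{R}$, and let $\mathcal{L}(\theta)=\int_a^b(\mathcal{N}^\theta(x)-f(x))^2p(x)\,\mathrm{d}x$. ($\mathcal{L}$ is continuously differentiable, so $\nabla\mathcal{L}$ is the usual gradient.) $\|\cdot\|$ is the Euclidean norm and $\mathbb{1}_A$ the indicator function. *)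

(* Defs.v *)
From Stdlib Require Import Reals Lra List.
From Coquelicot Require Import Coquelicot.
Import ListNotations.
Open Scope R_scope.

Definition sum1 (n : nat) (F : nat -> R) : R :=
  fold_right Rplus 0 (map F (seq 1 n)).

Definition clip (x : R) : R := Rmin (Rmax x 0) 1.

Definition Lip (F : R -> R) (a b : R) : Rbar :=
  Lub_Rbar (fun r => exists x y, a <= x <= b /\ a <= y <= b /\ x <> y /\
                       r = Rabs (F x - F y) / Rabs (x - y)).

(* Parameters theta = (theta_1, ..., theta_{h+1}) are encoded as nat -> R,
   only the indices 1..h+1 being relevant. *)
Definition psi (w : nat -> R) (theta : nat -> R) (i : nat) : R :=
  - / (w i) * theta i.

Definition NN (h : nat) (v w : nat -> R) (theta : nat -> R) (x : R) : R :=
  theta (S h) + sum1 h (fun i => v i * clip (w i * x + theta i)).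

Definition Loss (a b : R) (h : nat) (v w : nat -> R) (f p : R -> R)
  (theta : nat -> R) : R :=
  RInt (fun x => (NN h v w theta x - f x) ^ 2 * p x) a b.

Definition upd (theta : nat -> R) (j : nat) (s : R) : nat -> R :=
  fun k => if Nat.eqb k j then s else theta k.

(* j-th component of the gradient of L (L is continuously differentiable). *)
Definition gradLoss (a b : R) (h : nat) (v w : nat -> R) (f p : R -> R)
  (theta : nat -> R) (j : nat) : R :=
  Derive (fun s => Loss a b h v w f p (upd theta j s)) (theta j).

Definition dist_h (h : nat) (theta theta' : nat -> R) : R :=
  sqrt (sum1 (S h) (fun j => (theta j - theta' j) ^ 2)).

Definition min_vw (h : nat) (v w : nat -> R) : R :=
  fold_right Rmin (v 1%nat * w 1%nat) (map (fun i => v i * w i) (seq 1 h)).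

Definition ind_open (l u x : R) : R :=
  if Rlt_dec l x then (if Rlt_dec x u then 1 else 0) else 0.

(* V = sup_{x in (a,b)} sum_{i in {1..h}, x in I_i^theta} v_i
   (x in I_i^theta expressed by indicators of the two open intervals) *)
Definition Vsup (a b : R) (h : nat) (v w : nat -> R) (theta : nat -> R) : R :=
  real (Lub_Rbar (fun r => exists x, a < x < b /\
     r = sum1 h (fun i => v i * (ind_open (psi w theta i) (psi w theta i + / (w i)) x
                                 * ind_open a b x)))).

(* Main.v *)
Require Import Defs.
From Stdlib Require Import Reals List Lra Lia.
From Coquelicot Require Import Coquelicot.
Import ListNotations.
Open Scope R_scope.

Lemma ball_R (x y e : R) : ball x e y <-> Rabs (y - x) < e.
Proof. unfold ball; simpl; unfold AbsRing_ball, abs, minus, plus, opp; simpl. tauto. Qed.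

Lemma cont_of_eps (f : R -> R) (x : R) :
  (forall eps, 0 < eps -> exists d, 0 < d /\ forall y, Rabs (y - x) < d -> Rabs (f y - f x) < eps) ->
  continuous f x.
Proof.
  intros H. unfold continuous. apply filterlim_locally. intros eps.
  destruct (H eps (cond_pos eps)) as [d [Hd Hy]].
  exists (mkposreal d Hd). intros y Hb. apply ball_R. apply Hy. apply ball_R in Hb. exact Hb.
Qed.

Lemma eps_of_cont (f : R -> R) (x : R) : continuous f x ->
  forall eps, 0 < eps -> exists d, 0 < d /\ forall y, Rabs (y - x) < d -> Rabs (f y - f x) < eps.
Proof.
  intros H eps He. unfold continuous in H. rewrite filterlim_locally in H. destruct (H (mkposreal eps He)) as [d Hd].
  exists d. split. apply cond_pos. intros y Hy. apply ball_R. apply Hd. apply ball_R. exact Hy.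
Qed.

Lemma clip_0 x : x <= 0 -> clip x = 0.
Proof. intros. unfold clip, Rmax, Rmin. repeat destruct Rle_dec; lra. Qed.
Lemma clip_1 x : 1 <= x -> clip x = 1.
Proof. intros. unfold clip, Rmax, Rmin. repeat destruct Rle_dec; lra. Qed.
Lemma clip_id x : 0 <= x <= 1 -> clip x = x.
Proof. intros. unfold clip, Rmax, Rmin. repeat destruct Rle_dec; lra. Qed.
Lemma clip_range x : 0 <= clip x <= 1.
Proof. unfold clip, Rmax, Rmin. repeat destruct Rle_dec; lra. Qed.
Lemma clip_lip x y : Rabs (clip x - clip y) <= Rabs (x - y).
Proof.
  pose proof (Rle_abs (x-y)). pose proof (Rle_abs (-(x-y))). rewrite Rabs_Ropp in H0.
  apply Rabs_le. unfold clip, Rmax, Rmin. repeat destruct Rle_dec; split; lra. Qed.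
Lemma clip_mono x y : x <= y -> clip x <= clip y.
Proof. unfold clip, Rmax, Rmin. repeat destruct Rle_dec; lra. Qed.
Lemma clip_cases x : (x <= 0 /\ clip x = 0) \/ (0 <= x <= 1 /\ clip x = x) \/ (1 <= x /\ clip x = 1).
Proof. unfold clip, Rmax, Rmin. repeat destruct Rle_dec; lra. Qed.

Definition lsum (l : list nat) (F : nat -> R) := fold_right Rplus 0 (map F l).

Lemma sum1_lsum n F : sum1 n F = lsum (seq 1 n) F.
Proof. reflexivity. Qed.

Lemma lsum_le (l : list nat) F G : (forall i, In i l -> F i <= G i) -> lsum l F <= lsum l G.
Proof.
  induction l as [|x l IH]; unfold lsum in *; simpl; intros H. lra.
  apply Rplus_le_compat. apply H; auto. apply IH; intros; apply H; auto.
Qed.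

Lemma lsum_plus (l : list nat) F G : lsum l (fun i => F i + G i) = lsum l F + lsum l G.
Proof. induction l; unfold lsum in *; simpl. lra. rewrite IHl. lra. Qed.

Lemma lsum_scal (l : list nat) c F : lsum l (fun i => c * F i) = c * lsum l F.
Proof. induction l; unfold lsum in *; simpl. lra. rewrite IHl. lra. Qed.

Lemma lsum_ext (l : list nat) F G : (forall i, In i l -> F i = G i) -> lsum l F = lsum l G.
Proof.
  induction l as [|x l IH]; unfold lsum in *; simpl; intros H. reflexivity. rewrite H by auto. rewrite IH; auto.
Qed.

Lemma lsum_abs (l : list nat) F : Rabs (lsum l F) <= lsum l (fun i => Rabs (F i)).
Proof.
  induction l; unfold lsum in *; simpl. rewrite Rabs_R0; lra.
  eapply Rle_trans. apply Rabs_triang. lra.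
Qed.

Lemma lsum_nonneg (l : list nat) F : (forall i, In i l -> 0 <= F i) -> 0 <= lsum l F.
Proof.
  induction l as [|x l IH]; unfold lsum in *; simpl; intros H. lra.
  assert (0 <= F x) by auto. assert (0 <= fold_right Rplus 0 (map F l)) by (apply IH; auto). lra.
Qed.

Lemma lsum_zero (l : list nat) F : (forall i, In i l -> F i = 0) -> lsum l F = 0.
Proof.
  induction l as [|x l IH]; unfold lsum in *; simpl; intros H. reflexivity.
  rewrite H by auto. rewrite IH; auto. lra.
Qed.

Lemma lsum_cons x l F : lsum (x :: l) F = F x + lsum l F.
Proof. reflexivity. Qed.

Lemma lsum_single (l : list nat) F j : NoDup l -> In j l ->
  (forall i, In i l -> i <> j -> F i = 0) -> lsum l F = F j.
Proof.
  induction l as [|x l IH]; intros Hnd Hin H. contradiction.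
  rewrite lsum_cons. inversion Hnd; subst. simpl in Hin.
  destruct Hin as [<-|Hin].
  - rewrite (lsum_zero l F). lra. intros i Hi. apply H. simpl; auto. intros ->. contradiction.
  - rewrite (H x). rewrite IH; auto. lra. intros; apply H; simpl; auto. simpl; auto. intros ->. contradiction.
Qed.

Lemma lsum_le_single (l : list nat) F j : In j l ->
  (forall i, In i l -> 0 <= F i) -> F j <= lsum l F.
Proof.
  induction l as [|x l IH]; unfold lsum in *; simpl; intros Hin H. contradiction.
  destruct Hin as [<-|Hin].
  - assert (0 <= fold_right Rplus 0 (map F l)). apply lsum_nonneg. intros; apply H; auto. lra.
  - assert (0 <= F x) by auto. assert (F j <= fold_right Rplus 0 (map F l)). apply IH; auto. lra.
Qed.

Lemma in_seq1 n i : In i (seq 1 n) <-> (1 <= i <= n)%nat.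
Proof. rewrite in_seq. lia. Qed.

Lemma cR_plus (f g : R -> R) x : continuous f x -> continuous g x -> continuous (fun y => f y + g y) x.
Proof. intros. apply (continuous_plus f g x); auto. Qed.
Lemma cR_mult (f g : R -> R) x : continuous f x -> continuous g x -> continuous (fun y => f y * g y) x.
Proof. intros. apply (continuous_mult f g x); auto. Qed.
Lemma cR_minus (f g : R -> R) x : continuous f x -> continuous g x -> continuous (fun y => f y - g y) x.
Proof. intros. apply (continuous_minus f g x); auto. Qed.
Lemma cR_const (c x : R) : continuous (fun _ : R => c) x.
Proof. apply continuous_const. Qed.
Lemma cR_id (x : R) : continuous (fun y : R => y) x.
Proof. apply continuous_id. Qed.
Lemma cR_pow2 (f : R -> R) x : continuous f x -> continuous (fun y => (f y)^2) x.
Proof. intros. apply continuous_ext with (fun y => f y * f y). intros; simpl; ring. apply cR_mult; auto. Qed.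

Lemma bounded_on (g : R -> R) (a b : R) : a <= b -> (forall x, continuous g x) ->
  exists M, 0 <= M /\ forall x, a <= x <= b -> Rabs (g x) <= M.
Proof.
  intros Hab Hc. destruct (continuity_ab_maj (fun x => Rabs (g x)) a b Hab) as [m [Hm _]].
  intros c _. apply continuity_pt_filterlim. apply (continuous_comp g Rabs). apply Hc.
  apply continuity_pt_filterlim. apply Rcontinuity_abs.
  exists (Rabs (g m)). split. apply Rabs_pos. auto.
Qed.

Definition Err (h : nat) (v w : nat -> R) (f : R -> R) (th : nat -> R) (x : R) : R :=
  NN h v w th x - f x.

Definition vpos (h : nat) (v w : nat -> R) := forall i, (1 <= i <= h)%nat -> 0 < v i /\ 0 < w i.

Lemma NN_diff h v w th x y :
  NN h v w th y - NN h v w th x = sum1 h (fun i => v i * (clip (w i * y + th i) - clip (w i * x + th i))).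
Proof.
  unfold NN. rewrite !sum1_lsum.
  replace (lsum (seq 1 h) (fun i => v i * (clip (w i * y + th i) - clip (w i * x + th i))))
    with (lsum (seq 1 h) (fun i => v i * clip (w i * y + th i) + (-1) * (v i * clip (w i * x + th i)))).
  rewrite lsum_plus, lsum_scal. lra. apply lsum_ext. intros; lra.
Qed.

Lemma NN_mono h v w th x y : vpos h v w -> x <= y -> NN h v w th x <= NN h v w th y.
Proof.
  intros Hp Hxy. cut (0 <= NN h v w th y - NN h v w th x). lra.
  rewrite NN_diff. apply lsum_nonneg. intros i Hi. apply in_seq1 in Hi. destruct (Hp i Hi).
  apply Rmult_le_pos. lra. cut (clip (w i * x + th i) <= clip (w i * y + th i)). lra.
  apply clip_mono. nra.
Qed.

Definition sumvw h (v w : nat -> R) := sum1 h (fun i => v i * w i).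
Definition sumv h (v : nat -> R) := sum1 h (fun i => v i).

Lemma sumvw_nonneg h v w : vpos h v w -> 0 <= sumvw h v w.
Proof. intros Hp. apply lsum_nonneg. intros i Hi; apply in_seq1 in Hi; destruct (Hp i Hi); nra. Qed.
Lemma sumv_nonneg h v w : vpos h v w -> 0 <= sumv h v.
Proof. intros Hp. apply lsum_nonneg. intros i Hi; apply in_seq1 in Hi; destruct (Hp i Hi); nra. Qed.

Lemma NN_lip h v w th x y : vpos h v w ->
  Rabs (NN h v w th y - NN h v w th x) <= sumvw h v w * Rabs (y - x).
Proof.
  intros Hp. rewrite NN_diff. eapply Rle_trans. apply lsum_abs.
  unfold sumvw. rewrite sum1_lsum. rewrite Rmult_comm, <- lsum_scal. apply lsum_le.
  intros i Hi; apply in_seq1 in Hi; destruct (Hp i Hi).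
  rewrite Rabs_mult, Rabs_pos_eq by lra.
  pose proof (clip_lip (w i * y + th i) (w i * x + th i)).
  replace (w i * y + th i - (w i * x + th i)) with (w i * (y - x)) in H1 by ring.
  rewrite Rabs_mult, (Rabs_pos_eq (w i)) in H1 by lra. nra.
Qed.

Lemma NN_cont h v w th x : vpos h v w -> continuous (NN h v w th) x.
Proof.
  intros Hp. apply cont_of_eps. intros eps He. pose proof (sumvw_nonneg h v w Hp).
  exists (eps / (sumvw h v w + 1)). split. apply Rdiv_lt_0_compat; lra.
  intros y Hy. eapply Rle_lt_trans. apply NN_lip; auto.
  apply Rle_lt_trans with (sumvw h v w * (eps / (sumvw h v w + 1))).
  apply Rmult_le_compat_l; lra.
  apply Rlt_le_trans with ((sumvw h v w + 1) * (eps / (sumvw h v w + 1))).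
  apply Rmult_lt_compat_r. apply Rdiv_lt_0_compat; lra. lra. right; field; lra.
Qed.

Lemma Err_cont h v w f th x : vpos h v w -> (forall x, continuous f x) -> continuous (Err h v w f th) x.
Proof. intros. apply cR_minus. apply NN_cont; auto. auto. Qed.

Lemma NN_theta h v w th th' x : vpos h v w ->
  Rabs (NN h v w th' x - NN h v w th x) <=
  Rabs (th' (S h) - th (S h)) + sum1 h (fun i => v i * Rabs (th' i - th i)).
Proof.
  intros Hp. unfold NN. rewrite !sum1_lsum.
  replace (th' (S h) + lsum (seq 1 h) (fun i => v i * clip (w i * x + th' i)) -
     (th (S h) + lsum (seq 1 h) (fun i => v i * clip (w i * x + th i)))) with
    ((th' (S h) - th (S h)) + lsum (seq 1 h) (fun i => v i * (clip (w i * x + th' i) - clip (w i * x + th i)))).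
  eapply Rle_trans. apply Rabs_triang. apply Rplus_le_compat_l.
  eapply Rle_trans. apply lsum_abs. apply lsum_le.
  intros i Hi; apply in_seq1 in Hi; destruct (Hp i Hi).
  rewrite Rabs_mult, Rabs_pos_eq by lra. apply Rmult_le_compat_l. lra.
  eapply Rle_trans. apply clip_lip. right. f_equal. ring.
  replace (lsum (seq 1 h) (fun i => v i * (clip (w i * x + th' i) - clip (w i * x + th i))))
    with (lsum (seq 1 h) (fun i => v i * clip (w i * x + th' i) + (-1) * (v i * clip (w i * x + th i)))).
  rewrite lsum_plus, lsum_scal. ring. apply lsum_ext. intros; ring.
Qed.

Definition closeT h (th th' : nat -> R) (d : R) := forall k, (1 <= k <= S h)%nat -> Rabs (th' k - th k) < d.

Lemma NN_close h v w th th' x d : vpos h v w -> closeT h th th' d ->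
  Rabs (NN h v w th' x - NN h v w th x) <= (1 + sumv h v) * d.
Proof.
  intros Hp Hc. eapply Rle_trans. apply NN_theta; auto.
  unfold sumv. rewrite Rmult_plus_distr_r, Rmult_1_l. apply Rplus_le_compat.
  left. apply Hc. lia.
  rewrite !sum1_lsum, Rmult_comm, <- lsum_scal. apply lsum_le.
  intros i Hi; apply in_seq1 in Hi; destruct (Hp i Hi).
  rewrite (Rmult_comm d). apply Rmult_le_compat_l. lra. left. apply Hc. lia.
Qed.

Lemma upd_same th j s : upd th j s j = s.
Proof. unfold upd. rewrite Nat.eqb_refl. auto. Qed.
Lemma upd_other th j s k : k <> j -> upd th j s k = th k.
Proof. intros. unfold upd. destruct (Nat.eqb_spec k j). contradiction. auto. Qed.

Lemma NN_upd h v w th j s x : (1 <= j <= h)%nat ->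
  NN h v w (upd th j s) x = NN h v w th x - v j * clip (w j * x + th j) + v j * clip (w j * x + s).
Proof.
  intros Hj. unfold NN. rewrite upd_other by lia. rewrite !sum1_lsum.
  cut (lsum (seq 1 h) (fun i => v i * clip (w i * x + upd th j s i)) -
       lsum (seq 1 h) (fun i => v i * clip (w i * x + th i)) = v j * clip (w j * x + s) - v j * clip (w j * x + th j)).
  lra.
  replace (lsum (seq 1 h) (fun i => v i * clip (w i * x + upd th j s i)) -
       lsum (seq 1 h) (fun i => v i * clip (w i * x + th i))) with
    (lsum (seq 1 h) (fun i => v i * clip (w i * x + upd th j s i) + (-1) * (v i * clip (w i * x + th i)))).
  rewrite (lsum_single _ _ j). rewrite upd_same. ring.
  apply seq_NoDup. apply in_seq1; auto.
  intros i Hi Hij. rewrite upd_other by auto. ring.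
  rewrite lsum_plus, lsum_scal. ring.
Qed.

Lemma NN_upd_last h v w th s x :
  NN h v w (upd th (S h) s) x = NN h v w th x - th (S h) + s.
Proof.
  unfold NN. rewrite upd_same. rewrite !sum1_lsum.
  rewrite (lsum_ext _ (fun i => v i * clip (w i * x + upd th (S h) s i)) (fun i => v i * clip (w i * x + th i))).
  ring. intros i Hi; apply in_seq1 in Hi. rewrite upd_other by lia. auto.
Qed.

Lemma lip_cont (g : R -> R) L x : (forall y, Rabs (g y - g x) <= L * Rabs (y - x)) -> continuous g x.
Proof.
  intros H. apply cont_of_eps. intros eps He.
  exists (eps / (Rabs L + 1)). split. apply Rdiv_lt_0_compat. lra. pose proof (Rabs_pos L); lra.
  intros y Hy. eapply Rle_lt_trans. apply H.
  pose proof (Rabs_pos L). pose proof (Rle_abs L). pose proof (Rabs_pos (y - x)).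
  apply Rle_lt_trans with (Rabs L * Rabs (y - x)). apply Rmult_le_compat_r; lra.
  apply Rle_lt_trans with ((Rabs L + 1) * Rabs (y-x)). nra.
  apply Rlt_le_trans with ((Rabs L + 1) * (eps / (Rabs L + 1))).
  apply Rmult_lt_compat_l; lra. right; field; lra.
Qed.

Lemma clip_aff_cont w k x : continuous (fun y => clip (w*y+k)) x.
Proof.
  apply lip_cont with (Rabs w). intros y. eapply Rle_trans. apply clip_lip.
  rewrite <- Rabs_mult. right; f_equal; ring.
Qed.

Lemma rmax_lip a b : Rabs (Rmax 0 a - Rmax 0 b) <= Rabs (a - b).
Proof.
  pose proof (Rle_abs (a-b)). pose proof (Rle_abs (-(a-b))). rewrite Rabs_Ropp in H0.
  apply Rabs_le. unfold Rmax. repeat destruct Rle_dec; split; lra.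
Qed.

Lemma rmax_aff_cont w k x : continuous (fun y => Rmax 0 (w*y+k)) x.
Proof.
  apply lip_cont with (Rabs w). intros y. eapply Rle_trans. apply rmax_lip.
  rewrite <- Rabs_mult. right; f_equal; ring.
Qed.

Lemma exR (f : R -> R) a b : (forall x, continuous f x) -> ex_RInt f a b.
Proof. intros H. apply (ex_RInt_continuous (V := R_CompleteNormedModule)). intros; apply H. Qed.

Lemma RInt_plusR (f g : R -> R) a b : ex_RInt f a b -> ex_RInt g a b ->
  RInt (fun x => f x + g x) a b = RInt f a b + RInt g a b.
Proof. intros. apply (RInt_plus f g a b); auto. Qed.
Lemma RInt_minusR (f g : R -> R) a b : ex_RInt f a b -> ex_RInt g a b ->
  RInt (fun x => f x - g x) a b = RInt f a b - RInt g a b.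
Proof. intros. apply (RInt_minus f g a b); auto. Qed.
Lemma RInt_scalR (f : R -> R) a b c : ex_RInt f a b ->
  RInt (fun x => c * f x) a b = c * RInt f a b.
Proof. intros. apply (RInt_scal f a b c); auto. Qed.
Lemma RInt_constR a b c : RInt (fun _ => c) a b = (b - a) * c.
Proof. rewrite RInt_const. reflexivity. Qed.
Lemma RInt_ChaslesR (f : R -> R) a b c : ex_RInt f a b -> ex_RInt f b c ->
  RInt f a b + RInt f b c = RInt f a c.
Proof. intros. apply (RInt_Chasles (V := R_CompleteNormedModule) f a b c); auto. Qed.
Lemma RInt_pointR (f : R -> R) a : RInt f a a = 0.
Proof. apply (RInt_point (V := R_CompleteNormedModule)). Qed.

Lemma RInt_abs_le (f g : R -> R) a b : a <= b -> ex_RInt f a b -> ex_RInt g a b ->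
  (forall x, a < x < b -> Rabs (f x) <= g x) -> Rabs (RInt f a b) <= RInt g a b.
Proof.
  intros Hab Hf Hg H. apply Rabs_le. split.
  - assert (E : RInt (fun x => -1 * g x) a b = -1 * RInt g a b) by (apply RInt_scalR; auto).
    cut (RInt (fun x => -1 * g x) a b <= RInt f a b). lra.
    apply RInt_le; auto. apply (ex_RInt_scal (V := R_NormedModule)) with (k := -1) in Hg. exact Hg.
    intros x Hx. specialize (H x Hx). pose proof (Rle_abs (- f x)). rewrite Rabs_Ropp in H0. lra.
  - apply RInt_le; auto. intros x Hx. specialize (H x Hx). pose proof (Rle_abs (f x)). lra.
Qed.

Lemma RInt_le_R (f g : R -> R) a b : a <= b -> (forall x, continuous f x) -> (forall x, continuous g x) ->
  (forall x, a < x < b -> f x <= g x) -> RInt f a b <= RInt g a b.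
Proof. intros. apply RInt_le; auto; apply exR; auto. Qed.

Lemma deriv_of_quad (F : R -> R) x l K r : 0 < r ->
  (forall d, d <> 0 -> Rabs d < r -> Rabs (F (x + d) - F x - d * l) <= K * d^2) -> is_derive F x l.
Proof.
  intros Hr H. apply is_derive_Reals. intros eps He.
  assert (HK : 0 <= Rabs K) by apply Rabs_pos.
  assert (HK1 : 0 < eps / (Rabs K + 1)) by (apply Rdiv_lt_0_compat; lra).
  exists (mkposreal (Rmin r (eps / (Rabs K + 1))) (Rmin_glb_lt _ _ _ Hr HK1)).
  intros d Hd Hdl. simpl in Hdl.
  assert (Hd1 : Rabs d < r) by (eapply Rlt_le_trans; [apply Hdl| apply Rmin_l]).
  assert (Hd2 : Rabs d < eps / (Rabs K + 1)) by (eapply Rlt_le_trans; [apply Hdl| apply Rmin_r]).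
  specialize (H d Hd Hd1).
  replace ((F (x + d) - F x) / d - l) with ((F (x + d) - F x - d * l) / d) by (field; auto).
  unfold Rdiv. rewrite Rabs_mult, Rabs_inv.
  assert (0 < Rabs d) by (apply Rabs_pos_lt; auto).
  apply Rle_lt_trans with (K * d^2 * / Rabs d). apply Rmult_le_compat_r. left; apply Rinv_0_lt_compat; auto. auto.
  replace (K * d^2 * / Rabs d) with (K * Rabs d).
  apply Rle_lt_trans with (Rabs K * Rabs d). apply Rmult_le_compat_r. lra. apply Rle_abs.
  apply Rle_lt_trans with ((Rabs K + 1) * Rabs d). nra.
  apply Rlt_le_trans with ((Rabs K + 1) * (eps / (Rabs K + 1))). apply Rmult_lt_compat_l; lra.
  right; field; lra.
  rewrite <- Rsqr_pow2, (Rsqr_abs d). unfold Rsqr. field. lra.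
Qed.

Definition Pm (y : R) := (Rmax 0 y)^2 / 2.

Lemma Pm_nonneg y : 0 <= Pm y.
Proof. unfold Pm. pose proof (pow2_ge_0 (Rmax 0 y)). lra. Qed.
Lemma Pm_le y c : y <= c -> 0 <= c -> Pm y <= c^2/2.
Proof.
  intros. unfold Pm. pose proof (Rmax_l 0 y). assert (Rmax 0 y <= c). apply Rmax_lub; lra. nra.
Qed.

Lemma Pm_quad y d : Rabs (Pm (y + d) - Pm y - d * Rmax 0 y) <= 1/2 * d^2.
Proof.
  unfold Pm. apply Rabs_le. unfold Rmax. repeat destruct Rle_dec; split; nra.
Qed.

Lemma Pm_aff_deriv w k x : w <> 0 ->
  is_derive (fun x => Pm (w * x + k) / w) x (Rmax 0 (w * x + k)).
Proof.
  intros Hw. apply deriv_of_quad with (K := Rabs w / 2) (r := 1). lra.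
  intros d _ _. replace (w * (x + d) + k) with ((w*x+k) + w*d) by ring.
  pose proof (Pm_quad (w*x+k) (w*d)).
  replace (Pm (w * x + k + w * d) / w - Pm (w * x + k) / w - d * Rmax 0 (w * x + k))
    with ((Pm (w * x + k + w * d) - Pm (w * x + k) - (w*d) * Rmax 0 (w * x + k)) / w) by (field; auto).
  unfold Rdiv. rewrite Rabs_mult, Rabs_inv.
  assert (0 < Rabs w) by (apply Rabs_pos_lt; auto).
  apply Rle_trans with (1/2 * (w*d)^2 * / Rabs w). apply Rmult_le_compat_r. left; apply Rinv_0_lt_compat; auto. auto.
  rewrite <- (Rsqr_pow2 (w*d)), (Rsqr_abs (w*d)), Rabs_mult. unfold Rsqr. right.
  assert (Hd2: d^2 = Rabs d * Rabs d) by (rewrite <- Rsqr_pow2; rewrite Rsqr_abs; reflexivity). rewrite Hd2. field. lra.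
Qed.

Lemma RInt_rmax_aff w k al be : w <> 0 ->
  RInt (fun x => Rmax 0 (w * x + k)) al be = (Pm (w * be + k) - Pm (w * al + k)) / w.
Proof.
  intros Hw. apply is_RInt_unique.
  replace ((Pm (w * be + k) - Pm (w * al + k)) / w) with
    (minus (Pm (w * be + k) / w) (Pm (w * al + k) / w)).
  apply (is_RInt_derive (fun x => Pm (w * x + k) / w)).
  intros; apply Pm_aff_deriv; auto. intros; apply rmax_aff_cont.
  unfold minus, plus, opp; simpl. field; auto.
Qed.

Lemma clip_le_rmax y : clip y <= Rmax 0 y.
Proof. unfold clip, Rmax, Rmin. repeat destruct Rle_dec; lra. Qed.
Lemma one_minus_clip y : 1 - clip y <= Rmax 0 (1 - y).
Proof. unfold clip, Rmax, Rmin. repeat destruct Rle_dec; lra. Qed.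
Lemma clip_err y : Rabs (clip y - y) <= Rmax 0 (- y) + Rmax 0 (y - 1).
Proof. apply Rabs_le. unfold clip, Rmax, Rmin. repeat destruct Rle_dec; split; lra. Qed.

Lemma abs_prod_le x y X Y : Rabs x <= X -> Rabs y <= Y -> Rabs (x * y) <= X * Y.
Proof. intros. rewrite Rabs_mult. apply Rmult_le_compat; auto; apply Rabs_pos. Qed.

Lemma pw1 u d Bx px MB Mp v : u <= 0 -> Rabs Bx <= MB -> 0 <= px <= Mp -> 0 < v ->
  Rabs (((Bx + v * clip (u+d))^2 - (Bx + v * clip u)^2) * px) <= v * (2*MB+v) * Mp * Rmax 0 (u+d).
Proof.
  intros Hu HB Hp Hv. rewrite (clip_0 u Hu). pose proof (clip_range (u+d)) as Hc. pose proof (clip_le_rmax (u+d)).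
  replace (((Bx + v * clip (u+d))^2 - (Bx + v * 0)^2) * px) with ((v * clip (u+d)) * ((2*Bx + v * clip (u+d)) * px)) by ring.
  replace (v * (2 * MB + v) * Mp * Rmax 0 (u + d)) with ((v * Rmax 0 (u+d)) * ((2*MB+v) * Mp)) by ring.
  apply abs_prod_le. rewrite Rabs_pos_eq by nra. nra.
  apply abs_prod_le. eapply Rle_trans. apply Rabs_triang. rewrite Rabs_mult, (Rabs_pos_eq 2), (Rabs_mult v), (Rabs_pos_eq v), (Rabs_pos_eq (clip _)) by lra. nra.
  rewrite Rabs_pos_eq; lra.
Qed.

Lemma pw3 u d Bx px MB Mp v : 1 <= u -> Rabs Bx <= MB -> 0 <= px <= Mp -> 0 < v ->
  Rabs (((Bx + v * clip (u+d))^2 - (Bx + v * clip u)^2) * px) <= v * (2*MB+2*v) * Mp * Rmax 0 (1 - (u+d)).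
Proof.
  intros Hu HB Hp Hv. rewrite (clip_1 u Hu). pose proof (clip_range (u+d)) as Hc. pose proof (one_minus_clip (u+d)).
  replace (((Bx + v * clip (u+d))^2 - (Bx + v * 1)^2) * px) with ((v * (1 - clip (u+d))) * (-(2*Bx + v * clip (u+d) + v) * px)) by ring.
  replace (v * (2 * MB + 2*v) * Mp * Rmax 0 (1 - (u + d))) with ((v * Rmax 0 (1 - (u+d))) * ((2*MB+2*v) * Mp)) by ring.
  apply abs_prod_le. rewrite Rabs_pos_eq by nra. nra.
  apply abs_prod_le. rewrite Rabs_Ropp. eapply Rle_trans. apply Rabs_triang. eapply Rle_trans. apply Rplus_le_compat_r. apply Rabs_triang.
  rewrite Rabs_mult, (Rabs_pos_eq 2), (Rabs_mult v), (Rabs_pos_eq v), (Rabs_pos_eq (clip _)) by lra. nra.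
  rewrite Rabs_pos_eq; lra.
Qed.

Lemma pw2 u d Bx px MB Mp v : 0 <= u <= 1 -> Rabs Bx <= MB -> 0 <= px <= Mp -> 0 < v ->
  Rabs (((Bx + v * clip (u+d))^2 - (Bx + v * clip u)^2) * px - 2 * v * d * ((Bx + v * clip u) * px))
  <= 2 * v * (MB + v) * Mp * (Rmax 0 (- (u+d)) + Rmax 0 ((u+d) - 1)) + v^2 * Mp * d^2.
Proof.
  intros Hu HB Hp Hv. rewrite (clip_id u Hu). pose proof (clip_err (u+d)) as He.
  pose proof (clip_lip (u+d) u) as Hl. rewrite (clip_id u Hu) in Hl. replace (u + d - u) with d in Hl by ring.
  set (e := clip (u+d) - u) in *. replace (clip (u+d)) with (u + e) by (unfold e; ring).
  replace (clip (u + d) - (u + d)) with (e - d) in He by (unfold e; ring).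
  replace (((Bx + v * (u + e)) ^ 2 - (Bx + v * u) ^ 2) * px - 2 * v * d * ((Bx + v * u) * px))
    with ((2 * v * (e - d)) * ((Bx + v*u) * px) + (v^2 * px) * e^2) by ring.
  eapply Rle_trans. apply Rabs_triang. apply Rplus_le_compat.
  - replace (2 * v * (MB + v) * Mp * (Rmax 0 (- (u + d)) + Rmax 0 (u + d - 1))) with
      ((2 * v * (Rmax 0 (- (u + d)) + Rmax 0 (u + d - 1))) * ((MB + v) * Mp)) by ring.
    apply abs_prod_le. rewrite Rabs_mult, Rabs_mult, (Rabs_pos_eq 2), (Rabs_pos_eq v) by lra. nra.
    apply abs_prod_le. eapply Rle_trans. apply Rabs_triang. rewrite Rabs_mult, (Rabs_pos_eq v), (Rabs_pos_eq u) by lra. nra.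
    rewrite Rabs_pos_eq; lra.
  - rewrite Rabs_mult. rewrite (Rabs_pos_eq (v^2 * px)) by nra.
    rewrite <- RPow_abs. assert (Rabs e ^ 2 <= d ^ 2).
    { rewrite <- (Rabs_pos_eq (d^2)) by apply pow2_ge_0. rewrite <- RPow_abs.
      pose proof (Rabs_pos e). simpl. rewrite !Rmult_1_r; apply Rmult_le_compat; auto. }
    assert (0 <= Rabs e ^ 2) by (apply pow2_ge_0). assert (0 <= v^2) by (apply pow2_ge_0).
    apply Rmult_le_compat; auto. nra. apply Rmult_le_compat_l; lra.
Qed.

Lemma Pm_le_d y d : y <= Rabs d -> Pm y <= d^2/2.
Proof. intros. rewrite <- (Rabs_pos_eq (d^2)) by apply pow2_ge_0. rewrite <- RPow_abs. apply Pm_le; auto. apply Rabs_pos. Qed.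

Lemma RInt_rmax_le1 w k al be d : 0 < w -> al <= be -> (al = be \/ w * be + k <= 0) ->
  RInt (fun x => Rmax 0 (w * x + (k + d))) al be <= d^2 / (2*w).
Proof.
  intros Hw Hab Hc. rewrite RInt_rmax_aff by lra. destruct Hc as [<-|Hc].
  - replace ((Pm (w * al + (k + d)) - Pm (w * al + (k + d))) / w) with 0 by (field; lra).
    apply Rmult_le_pos. apply pow2_ge_0. left; apply Rinv_0_lt_compat; lra.
  - pose proof (Pm_nonneg (w * al + (k + d))). pose proof (Rle_abs d).
    assert (Pm (w * be + (k + d)) <= d^2/2) by (apply Pm_le_d; lra).
    replace (d^2/(2*w)) with ((d^2/2)/w) by (field; lra).
    unfold Rdiv. apply Rmult_le_compat_r. left; apply Rinv_0_lt_compat; lra. lra.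
Qed.

Lemma RInt_rmax_le2 w k al be d : 0 < w -> al <= be -> (al = be \/ 0 <= w * al + k) ->
  RInt (fun x => Rmax 0 ((-w) * x + (-(k + d)))) al be <= d^2 / (2*w).
Proof.
  intros Hw Hab Hc. rewrite RInt_rmax_aff by lra. destruct Hc as [<-|Hc].
  - replace ((Pm (- w * al + - (k + d)) - Pm (- w * al + - (k + d))) / - w) with 0 by (field; lra).
    apply Rmult_le_pos. apply pow2_ge_0. left; apply Rinv_0_lt_compat; lra.
  - pose proof (Pm_nonneg (- w * be + - (k + d))). pose proof (Rle_abs (-d)). rewrite Rabs_Ropp in H0.
    assert (Pm (- w * al + - (k + d)) <= d^2/2) by (apply Pm_le_d; lra).
    replace (d^2/(2*w)) with ((d^2/2)/w) by (field; lra).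
    replace ((Pm (- w * be + - (k + d)) - Pm (- w * al + - (k + d))) / - w) with
      ((Pm (- w * al + - (k + d)) - Pm (- w * be + - (k + d))) / w) by (field; lra).
    unfold Rdiv. apply Rmult_le_compat_r. left; apply Rinv_0_lt_compat; lra. lra.
Qed.

Lemma clamp_spec a b y : a <= b ->
  (y <= a /\ Rmax a (Rmin b y) = a) \/ (a <= y <= b /\ Rmax a (Rmin b y) = y) \/ (b <= y /\ Rmax a (Rmin b y) = b).
Proof.
  intros. destruct (Rle_dec y a). left. split; auto. rewrite Rmin_right by lra. apply Rmax_left; lra.
  destruct (Rle_dec y b). right; left. split. lra. rewrite Rmin_right by lra. apply Rmax_right; lra.
  right; right. split. lra. rewrite Rmin_left by lra. apply Rmax_right; lra.
Qed.

Lemma cont_bc (B : R -> R) v w s x : (forall x, continuous B x) -> continuous (fun x => B x + v * clip (w*x+s)) x.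
Proof. intros. apply cR_plus; auto. apply cR_mult. apply cR_const. apply clip_aff_cont. Qed.

Lemma clip_param_deriv a b (B p : R -> R) v w s0 :
  a < b -> 0 < v -> 0 < w -> (forall x, continuous B x) -> (forall x, continuous p x) -> (forall x, 0 <= p x) ->
  is_derive (fun s => RInt (fun x => (B x + v * clip (w*x + s))^2 * p x) a b) s0
   (2 * v * RInt (fun x => (B x + v * clip (w*x+s0)) * p x)
       (Rmax a (Rmin b (- / w * s0))) (Rmax a (Rmin b (- / w * s0 + / w)))).
Proof.
  intros Hab Hv Hw HB Hpc Hp0.
  destruct (bounded_on B a b) as [MB [HMB HBb]]; auto. lra.
  destruct (bounded_on p a b) as [Mp [HMp Hpb]]; auto. lra.
  set (psi0 := - / w * s0).
  assert (Hpsi : forall x, w * x + s0 = w * (x - psi0)) by (intros; unfold psi0; field; lra).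
  set (lo := Rmax a (Rmin b psi0)). set (hi := Rmax a (Rmin b (psi0 + / w))).
  assert (Hiw : 0 < / w) by (apply Rinv_0_lt_compat; lra).
  assert (Hwi : w * / w = 1) by (field; lra).
  assert (Facts : (a <= lo <= hi /\ hi <= b) /\ (lo = a \/ lo <= psi0) /\ (forall x, a < x < lo -> x < psi0)
     /\ (lo = hi \/ (psi0 <= lo /\ hi <= psi0 + / w)) /\ (forall x, lo < x < hi -> psi0 <= x <= psi0 + / w)
     /\ (hi = b \/ psi0 + / w <= hi) /\ (forall x, hi < x < b -> psi0 + / w < x)).
  { destruct (clamp_spec a b psi0) as [[C1 E1]|[[C1 E1]|[C1 E1]]]; [lra|..];
    (destruct (clamp_spec a b (psi0 + / w)) as [[C2 E2]|[[C2 E2]|[C2 E2]]]; [lra|..]);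
    fold lo in E1; fold hi in E2; rewrite E1, E2; (split; [lra|]); (split; [lra|]); (split; [intros; lra|]);
    (split; [lra|]); (split; [intros; lra|]); (split; [lra|]); intros; lra. }
  clearbody lo hi. destruct Facts as [Hlo [O1 [O1' [O2 [O2' [O3 O3']]]]]].
  assert (Hsgn : forall x, x <= psi0 -> w * x + s0 <= 0) by (intros x Hx; rewrite Hpsi; nra).
  assert (Hsgn2 : forall x, psi0 <= x -> 0 <= w * x + s0) by (intros x Hx; rewrite Hpsi; nra).
  assert (Hsgn3 : forall x, x <= psi0 + / w -> w * x + s0 <= 1) by (intros x Hx; rewrite Hpsi; nra).
  assert (Hsgn4 : forall x, psi0 + / w <= x -> 1 <= w * x + s0) by (intros x Hx; rewrite Hpsi; nra).
  assert (Hpx : forall x, a <= x <= b -> 0 <= p x <= Mp).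
  { intros x Hx. split. auto. specialize (Hpb x Hx). rewrite Rabs_pos_eq in Hpb; auto. }
  set (K1 := v*(2*MB+v)*Mp). set (K2 := 2*v*(MB+v)*Mp). set (K3 := v^2*Mp). set (K4 := v*(2*MB+2*v)*Mp).
  assert (HK1 : 0 <= K1) by (unfold K1; apply Rmult_le_pos; nra).
  assert (HK2 : 0 <= K2) by (unfold K2; apply Rmult_le_pos; nra).
  assert (HK3 : 0 <= K3) by (unfold K3; apply Rmult_le_pos; nra).
  assert (HK4 : 0 <= K4) by (unfold K4; apply Rmult_le_pos; nra).
  apply deriv_of_quad with (r := 1) (K := K1/(2*w) + K2*(2/(2*w)) + K3*(b-a) + K4/(2*w)). lra.
  intros d Hd0 Hd1.
  set (G0 := fun x => (B x + v * clip (w*x+s0)) * p x).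
  set (f1 := fun x => (B x + v * clip (w*x + (s0+d)))^2 * p x).
  set (f0 := fun x => (B x + v * clip (w*x + s0))^2 * p x).
  assert (cf1 : forall x, continuous f1 x) by (intros; unfold f1; apply cR_mult; auto; apply cR_pow2; apply cont_bc; auto).
  assert (cf0 : forall x, continuous f0 x) by (intros; unfold f0; apply cR_mult; auto; apply cR_pow2; apply cont_bc; auto).
  assert (cG0 : forall x, continuous G0 x) by (intros; unfold G0; apply cR_mult; auto; apply cont_bc; auto).
  set (D := fun x => f1 x - f0 x). set (H := fun x => 2*v*d * G0 x).
  assert (cD : forall x, continuous D x) by (intros; unfold D; apply cR_minus; auto).
  assert (cH : forall x, continuous H x) by (intros; unfold H; apply cR_mult; auto; apply cR_const).
  assert (E1 : RInt f1 a b - RInt f0 a b = RInt D a b) by (symmetry; apply RInt_minusR; apply exR; auto).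
  assert (E2 : RInt D a b = RInt D a lo + RInt D lo hi + RInt D hi b).
  { rewrite !RInt_ChaslesR; auto; apply exR; auto. }
  assert (E3 : d * (2*v*RInt G0 lo hi) = RInt H lo hi) by (unfold H; rewrite RInt_scalR; [ring| apply exR; auto]).
  assert (E4 : RInt D lo hi - RInt H lo hi = RInt (fun x => D x - H x) lo hi) by (symmetry; apply RInt_minusR; apply exR; auto).
  change (Rabs (RInt f1 a b - RInt f0 a b - d * (2 * v * RInt G0 lo hi)) <=
      (K1 / (2 * w) + K2 * (2 / (2 * w)) + K3 * (b - a) + K4 / (2 * w)) * d ^ 2).
  rewrite E1, E2, E3.
  replace (RInt D a lo + RInt D lo hi + RInt D hi b - RInt H lo hi) with
    (RInt D a lo + (RInt D lo hi - RInt H lo hi) + RInt D hi b) by ring.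
  rewrite E4.
  assert (HD : forall x, D x = ((B x + v * clip ((w*x+s0)+d))^2 - (B x + v * clip (w*x+s0))^2) * p x).
  { intros x. unfold D, f1, f0. replace (w*x+(s0+d)) with (w*x+s0+d) by ring. ring. }
  assert (B1 : Rabs (RInt D a lo) <= K1 / (2*w) * d^2).
  { apply Rle_trans with (RInt (fun x => K1 * Rmax 0 (w*x + (s0+d))) a lo).
    apply RInt_abs_le. lra. apply exR; auto. apply exR; intros; apply cR_mult. apply cR_const. apply rmax_aff_cont.
    intros x Hx. rewrite HD. replace (w*x+(s0+d)) with (w*x+s0+d) by ring. unfold K1.
    apply pw1; auto. apply Hsgn. left; apply O1'; auto. apply HBb; lra. apply Hpx; lra.
    rewrite RInt_scalR by (apply exR; intros; apply rmax_aff_cont).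
    replace (K1 / (2*w) * d^2) with (K1 * (d^2/(2*w))) by (field; lra).
    apply Rmult_le_compat_l; auto. apply RInt_rmax_le1; [lra|lra|].
    destruct O1 as [->|O1]; [left; reflexivity|]. right. apply Hsgn; auto. }
  assert (B3 : Rabs (RInt D hi b) <= K4 / (2*w) * d^2).
  { apply Rle_trans with (RInt (fun x => K4 * Rmax 0 ((-w)*x + (-((s0-1)+d)))) hi b).
    apply RInt_abs_le. lra. apply exR; auto. apply exR; intros; apply cR_mult. apply cR_const. apply rmax_aff_cont.
    intros x Hx. rewrite HD. replace ((-w)*x + (-((s0-1)+d))) with (1 - (w*x+s0+d)) by ring. unfold K4.
    apply pw3; auto. apply Hsgn4. left; apply O3'; auto. apply HBb; lra. apply Hpx; lra.
    rewrite RInt_scalR by (apply exR; intros; apply rmax_aff_cont).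
    replace (K4 / (2*w) * d^2) with (K4 * (d^2/(2*w))) by (field; lra).
    apply Rmult_le_compat_l; auto. apply RInt_rmax_le2; [lra|lra|].
    destruct O3 as [->|O3]; [left; reflexivity|]. right. pose proof (Hsgn4 hi O3). lra. }
  assert (B2 : Rabs (RInt (fun x => D x - H x) lo hi) <= K2 * (2/(2*w)) * d^2 + K3 * (b-a) * d^2).
  { apply Rle_trans with (RInt (fun x => K2 * (Rmax 0 ((-w)*x + (-(s0+d))) + Rmax 0 (w*x + ((s0-1)+d))) + K3 * d^2) lo hi).
    apply RInt_abs_le. lra. apply exR; intros; apply cR_minus; auto.
    apply exR; intros; apply cR_plus. apply cR_mult. apply cR_const. apply cR_plus; apply rmax_aff_cont. apply cR_const.
    intros x Hx. rewrite HD. unfold H, G0.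
    replace ((-w)*x + (-(s0+d))) with (-(w*x+s0+d)) by ring.
    replace (w*x + ((s0-1)+d)) with ((w*x+s0+d) - 1) by ring. unfold K2, K3.
    apply pw2; auto. split; [apply Hsgn2|apply Hsgn3]; apply O2'; auto. apply HBb; lra. apply Hpx; lra.
    rewrite RInt_plusR. rewrite RInt_scalR, RInt_plusR, RInt_constR.
    2,3: apply exR; intros; apply rmax_aff_cont.
    2: apply exR; intros; apply cR_plus; apply rmax_aff_cont.
    2: apply exR; intros; apply cR_mult; [apply cR_const| apply cR_plus; apply rmax_aff_cont].
    2: apply exR; intros; apply cR_const.
    assert (I1 : RInt (fun x => Rmax 0 ((-w)*x + (-(s0+d)))) lo hi <= d^2/(2*w)).
    { apply RInt_rmax_le2; [lra|lra|]. destruct O2 as [->|[O2 _]]; [left; reflexivity|]. right. apply Hsgn2; auto. }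
    assert (I2 : RInt (fun x => Rmax 0 (w*x + ((s0-1)+d))) lo hi <= d^2/(2*w)).
    { apply RInt_rmax_le1; [lra|lra|]. destruct O2 as [->|[_ O2]]; [left; reflexivity|]. right. pose proof (Hsgn3 hi O2). lra. }
    assert (0 <= d^2) by apply pow2_ge_0.
    assert ((hi - lo) * (K3 * d^2) <= (b - a) * (K3 * d^2)) by (apply Rmult_le_compat_r; nra).
    replace (K2 * (2/(2*w)) * d^2) with (K2 * (d^2/(2*w) + d^2/(2*w))) by (field; lra).
    assert (K2 * (RInt (fun x => Rmax 0 ((-w)*x + (-(s0+d)))) lo hi + RInt (fun x => Rmax 0 (w*x + ((s0-1)+d))) lo hi)
       <= K2 * (d^2/(2*w) + d^2/(2*w))) by (apply Rmult_le_compat_l; lra).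
    lra. }
  eapply Rle_trans. apply Rabs_triang. eapply Rle_trans. apply Rplus_le_compat_r. apply Rabs_triang.
  lra.
Qed.

Definition lo_ (a b : R) (w : nat -> R) th j := Rmax a (Rmin b (psi w th j)).
Definition hi_ (a b : R) (w : nat -> R) th j := Rmax a (Rmin b (psi w th j + / w j)).
Definition EP h v w f p th := fun x => Err h v w f th x * p x.
Definition gfor a b h v w f p th j :=
  if Nat.eqb j (S h) then 2 * RInt (EP h v w f p th) a b
  else 2 * v j * RInt (EP h v w f p th) (lo_ a b w th j) (hi_ a b w th j).

Lemma EP_cont h v w (f p : R -> R) th x : vpos h v w -> (forall x, continuous f x) -> (forall x, continuous p x) ->
  continuous (EP h v w f p th) x.
Proof. intros. unfold EP. apply cR_mult; auto. apply Err_cont; auto. Qed.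

Lemma grad_eq a b h v w (f p : R -> R) th j : a < b -> vpos h v w -> (forall x, continuous f x) ->
  (forall x, continuous p x) -> (forall x, 0 <= p x) -> (1 <= j <= S h)%nat ->
  gradLoss a b h v w f p th j = gfor a b h v w f p th j.
Proof.
  intros Hab Hp Hf Hpc Hp0 Hj. unfold gradLoss, gfor.
  destruct (Nat.eqb_spec j (S h)) as [->|Hne].
  - set (t0 := th (S h)).
    set (A0 := RInt (fun x => (Err h v w f th x)^2 * p x) a b).
    set (A1 := RInt (EP h v w f p th) a b).
    set (A2 := RInt p a b).
    assert (HL : forall s, Loss a b h v w f p (upd th (S h) s) = A0 + 2 * (s - t0) * A1 + (s - t0)^2 * A2).
    { intros s. unfold Loss.
      rewrite (RInt_ext _ (fun x => (Err h v w f th x)^2 * p x + ((2*(s-t0)) * EP h v w f p th x + (s-t0)^2 * p x))).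
      rewrite RInt_plusR, RInt_plusR, !RInt_scalR. unfold A0, A1, A2. ring.
      all: try (apply exR; intros y).
      all: try (assert (cEP : forall y, continuous (EP h v w f p th) y) by (intros; apply EP_cont; auto)).
      all: try (assert (cEr : forall y, continuous (Err h v w f th) y) by (intros; apply Err_cont; auto)).
      auto. auto. apply cR_mult; [apply cR_const|auto]. apply cR_mult; [apply cR_const|auto].
      apply cR_mult; [apply cR_pow2|]; auto.
      apply cR_plus; (apply cR_mult; [apply cR_const|auto]).
      intros x _. rewrite NN_upd_last. unfold EP, Err, t0. match goal with |- @eq _ ?l ?r => change (@eq R l r) end. ring. }
    rewrite (Derive_ext _ _ _ HL). apply is_derive_unique.
    apply deriv_of_quad with (K := Rabs A2) (r := 1). lra.
    intros d _ _. replace (A0 + 2 * (t0 + d - t0) * A1 + (t0 + d - t0) ^ 2 * A2 - (A0 + 2 * (t0 - t0) * A1 + (t0 - t0) ^ 2 * A2) -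
     d * (2 * A1)) with (A2 * d^2) by ring. rewrite Rabs_mult. rewrite (Rabs_pos_eq (d^2)) by apply pow2_ge_0. lra.
  - assert (Hj' : (1 <= j <= h)%nat) by lia. destruct (Hp j Hj') as [Hv Hw].
    set (Bf := fun x => NN h v w th x - v j * clip (w j * x + th j) - f x).
    assert (HL : forall s, Loss a b h v w f p (upd th j s) = RInt (fun x => (Bf x + v j * clip (w j * x + s))^2 * p x) a b).
    { intros s. unfold Loss. apply RInt_ext. intros x _. rewrite NN_upd by auto. unfold Bf. f_equal. f_equal. ring. }
    rewrite (Derive_ext _ _ _ HL). apply is_derive_unique.
    replace (2 * v j * RInt (EP h v w f p th) (lo_ a b w th j) (hi_ a b w th j)) with
      (2 * v j * RInt (fun x => (Bf x + v j * clip (w j * x + th j)) * p x)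
       (Rmax a (Rmin b (- / w j * th j))) (Rmax a (Rmin b (- / w j * th j + / w j)))).
    apply clip_param_deriv; auto.
    intros; unfold Bf; apply cR_minus; [apply cR_minus; [apply NN_cont; auto| apply cR_mult; [apply cR_const|apply clip_aff_cont]]|auto].
    f_equal. unfold lo_, hi_, psi. apply RInt_ext. intros x _. unfold EP, Err, Bf. match goal with |- @eq _ ?l ?r => change (@eq R l r) end. ring.
Qed.

Lemma RInt_swapR (f : R -> R) a b : ex_RInt f a b -> RInt f b a = - RInt f a b.
Proof. intros H. rewrite <- (opp_RInt_swap f a b H). reflexivity. Qed.

Lemma abs_RInt_const2 (f : R -> R) a b M : (forall x, continuous f x) ->
  (forall x, Rmin a b <= x <= Rmax a b -> Rabs (f x) <= M) -> Rabs (RInt f a b) <= Rabs (b - a) * M.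
Proof.
  intros Hc HM. destruct (Rle_dec a b).
  - rewrite (Rabs_pos_eq (b - a)) by lra. apply abs_RInt_le_const; auto. apply exR; auto.
    intros; apply HM. rewrite Rmin_left, Rmax_right; lra.
  - rewrite RInt_swapR by (apply exR; auto). rewrite Rabs_Ropp.
    rewrite (Rabs_left (b - a)) by lra. replace (- (b - a)) with (a - b) by ring.
    apply abs_RInt_le_const; auto. lra. apply exR; auto.
    intros; apply HM. rewrite Rmin_right, Rmax_left; lra.
Qed.

Lemma clamp_lip a b y y' : a <= b -> Rabs (Rmax a (Rmin b y') - Rmax a (Rmin b y)) <= Rabs (y' - y).
Proof.
  intros Hab. destruct (clamp_spec a b y Hab) as [[C1 E1]|[[C1 E1]|[C1 E1]]];
  destruct (clamp_spec a b y' Hab) as [[C2 E2]|[[C2 E2]|[C2 E2]]]; rewrite E1, E2;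
  pose proof (Rle_abs (y'-y)); pose proof (Rle_abs (-(y'-y))); rewrite Rabs_Ropp in *;
  apply Rabs_le; split; lra.
Qed.

Lemma clamp_in a b y : a <= b -> a <= Rmax a (Rmin b y) <= b.
Proof. intros Hab. destruct (clamp_spec a b y Hab) as [[C1 E1]|[[C1 E1]|[C1 E1]]]; rewrite E1; lra. Qed.

Lemma lo_hi a b w th j : a <= b -> 0 < w j -> a <= lo_ a b w th j <= hi_ a b w th j /\ hi_ a b w th j <= b.
Proof.
  intros Hab Hw. unfold lo_, hi_. assert (0 < / w j) by (apply Rinv_0_lt_compat; auto).
  destruct (clamp_spec a b (psi w th j) Hab) as [[C1 E1]|[[C1 E1]|[C1 E1]]];
  destruct (clamp_spec a b (psi w th j + / w j) Hab) as [[C2 E2]|[[C2 E2]|[C2 E2]]]; rewrite E1, E2; lra.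
Qed.

Lemma gfor_lip a b h v w (f p : R -> R) (th : nat -> R) j : a < b -> vpos h v w -> (forall x, continuous f x) ->
  (forall x, continuous p x) -> (forall x, 0 <= p x) -> (1 <= j <= S h)%nat ->
  exists L, 0 <= L /\ forall (th' : nat -> R) d, 0 <= d -> closeT h th th' d -> Rabs (gfor a b h v w f p th' j - gfor a b h v w f p th j) <= L * d.
Proof.
  intros Hab Hp Hf Hpc Hp0 Hj.
  destruct (bounded_on (Err h v w f th) a b) as [M [HM HMb]]. lra. intros; apply Err_cont; auto.
  destruct (bounded_on p a b) as [Mp [HMp Hpb]]; auto. lra.
  set (C := 1 + sumv h v). assert (HC : 0 <= C) by (unfold C; pose proof (sumv_nonneg h v w Hp); lra).
  assert (cEP : forall th x, continuous (EP h v w f p th) x) by (intros; apply EP_cont; auto).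
  assert (Hdiff : forall th' d x, closeT h th th' d -> a <= x <= b ->
     Rabs (EP h v w f p th' x - EP h v w f p th x) <= C * d * Mp).
  { intros th' d x Hc Hx. unfold EP, Err.
    replace ((NN h v w th' x - f x) * p x - (NN h v w th x - f x) * p x) with ((NN h v w th' x - NN h v w th x) * p x) by ring.
    rewrite Rabs_mult. apply Rmult_le_compat. apply Rabs_pos. apply Rabs_pos. apply NN_close; auto. auto. }
  assert (Hbd : forall x, a <= x <= b -> Rabs (EP h v w f p th x) <= M * Mp).
  { intros x Hx. unfold EP. rewrite Rabs_mult. apply Rmult_le_compat; try apply Rabs_pos; auto. }
  unfold gfor. destruct (Nat.eqb_spec j (S h)) as [->|Hne].
  - exists (2 * ((b - a) * (C * Mp))). split. apply Rmult_le_pos. lra. apply Rmult_le_pos. lra. nra.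
    intros th' d Hd Hc.
    rewrite <- Rmult_minus_distr_l, <- RInt_minusR by (apply exR; auto).
    rewrite Rabs_mult, Rabs_pos_eq by lra.
    replace (2 * ((b - a) * (C * Mp)) * d) with (2 * ((b - a) * (C * d * Mp))) by ring.
    apply Rmult_le_compat_l. lra.
    apply abs_RInt_le_const. lra. apply exR; intros; apply cR_minus; auto.
    intros; apply Hdiff; auto.
  - assert (Hj' : (1 <= j <= h)%nat) by lia. destruct (Hp j Hj') as [Hv Hw].
    exists (2 * v j * ((b - a) * (C * Mp) + 2 * (/ w j * (M * Mp)))).
    assert (Hiw : 0 < / w j) by (apply Rinv_0_lt_compat; auto).
    split. apply Rmult_le_pos. lra. apply Rplus_le_le_0_compat. apply Rmult_le_pos. lra. nra.
    apply Rmult_le_pos. lra. apply Rmult_le_pos. lra. nra.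
    intros th' d Hd Hc.
    destruct (lo_hi a b w th j) as [Hl1 Hl2]; auto. lra.
    destruct (lo_hi a b w th' j) as [Hl1' Hl2']; auto. lra.
    set (l := lo_ a b w th j) in *. set (r := hi_ a b w th j) in *.
    set (l' := lo_ a b w th' j) in *. set (r' := hi_ a b w th' j) in *.
    assert (Hpsi : Rabs (psi w th' j - psi w th j) <= / w j * d).
    { unfold psi. replace (- / w j * th' j - - / w j * th j) with (/ w j * (-(th' j - th j))) by ring.
      rewrite Rabs_mult, Rabs_Ropp, (Rabs_pos_eq (/ w j)) by lra. apply Rmult_le_compat_l. lra. left; apply Hc. lia. }
    assert (Hll : Rabs (l' - l) <= / w j * d).
    { eapply Rle_trans. apply clamp_lip. lra. auto. }
    assert (Hrr : Rabs (r' - r) <= / w j * d).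
    { eapply Rle_trans. apply clamp_lip. lra. replace (psi w th' j + / w j - (psi w th j + / w j)) with (psi w th' j - psi w th j) by ring. auto. }
    assert (Sp : RInt (EP h v w f p th) l' r' = RInt (EP h v w f p th) l' l + RInt (EP h v w f p th) l r + RInt (EP h v w f p th) r r').
    { rewrite !RInt_ChaslesR; auto; apply exR; auto. }
    assert (T1 : Rabs (RInt (EP h v w f p th') l' r' - RInt (EP h v w f p th) l' r') <= (b - a) * (C * d * Mp)).
    { rewrite <- RInt_minusR by (apply exR; auto). apply Rle_trans with ((r' - l') * (C * d * Mp)). apply abs_RInt_le_const. lra. apply exR; intros; apply cR_minus; auto.
      intros; apply Hdiff; auto. lra. apply Rmult_le_compat_r. apply Rmult_le_pos; [apply Rmult_le_pos|]; lra. lra. }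
    assert (T2 : Rabs (RInt (EP h v w f p th) l' l) <= / w j * d * (M * Mp)).
    { apply Rle_trans with (Rabs (l - l') * (M * Mp)). apply abs_RInt_const2; auto. intros x Hx; apply Hbd. assert (a <= Rmin l' l) by (apply Rmin_glb; lra).
      assert (Rmax l' l <= b) by (apply Rmax_lub; lra). lra.
      apply Rmult_le_compat_r. nra. rewrite Rabs_minus_sym; auto. }
    assert (T3 : Rabs (RInt (EP h v w f p th) r r') <= / w j * d * (M * Mp)).
    { apply Rle_trans with (Rabs (r' - r) * (M * Mp)). apply abs_RInt_const2; auto. intros x Hx; apply Hbd. assert (a <= Rmin r r') by (apply Rmin_glb; lra).
      assert (Rmax r r' <= b) by (apply Rmax_lub; lra). lra.
      apply Rmult_le_compat_r. nra. auto. }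
    replace (2 * v j * RInt (EP h v w f p th') l' r' - 2 * v j * RInt (EP h v w f p th) l r) with
      (2 * v j * ((RInt (EP h v w f p th') l' r' - RInt (EP h v w f p th) l' r') + RInt (EP h v w f p th) l' l + RInt (EP h v w f p th) r r')) by (rewrite Sp; ring).
    rewrite Rabs_mult, (Rabs_pos_eq (2 * v j)) by lra.
    replace (2 * v j * ((b - a) * (C * Mp) + 2 * (/ w j * (M * Mp))) * d) with
      (2 * v j * ((b - a) * (C * d * Mp) + / w j * d * (M * Mp) + / w j * d * (M * Mp))) by ring.
    apply Rmult_le_compat_l. lra.
    eapply Rle_trans. apply Rabs_triang. eapply Rle_trans. apply Rplus_le_compat_r. apply Rabs_triang. lra.
Qed.

Lemma coord_le_dist h (th th' : nat -> R) k : (1 <= k <= S h)%nat -> Rabs (th k - th' k) <= dist_h h th th'.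
Proof.
  intros Hk. unfold dist_h. rewrite <- sqrt_Rsqr_abs. apply sqrt_le_1_alt.
  rewrite sum1_lsum. rewrite Rsqr_pow2. apply (lsum_le_single _ (fun j => (th j - th' j)^2)).
  apply in_seq1; auto. intros; apply pow2_ge_0.
Qed.

Lemma conv_close h (Th : R -> nat -> R) (vt : nat -> R) :
  is_lim (fun t => dist_h h (Th t) vt) p_infty 0 ->
  forall d, 0 < d -> exists T, forall t, T < t -> closeT h vt (Th t) d.
Proof.
  intros Hl d Hd. apply is_lim_spec in Hl. destruct (Hl (mkposreal d Hd)) as [T HT].
  exists T. intros t Ht k Hk. specialize (HT t Ht). simpl in HT.
  apply Rle_lt_trans with (dist_h h (Th t) vt). apply coord_le_dist; auto.
  eapply Rle_lt_trans. apply Rle_abs. replace (dist_h h (Th t) vt) with (dist_h h (Th t) vt - 0) by ring. exact HT.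
Qed.

Lemma within_eps (g : R -> R) t : filterlim g (within (fun s => 0 <= s) (locally t)) (locally (g t)) ->
  forall eps, 0 < eps -> exists eta, 0 < eta /\ forall s, 0 <= s -> Rabs (s - t) < eta -> Rabs (g s - g t) < eps.
Proof.
  intros H eps He. rewrite filterlim_locally in H. destruct (H (mkposreal eps He)) as [eta Heta].
  exists eta. split. apply cond_pos. intros s Hs Hst. apply ball_R. apply Heta; [apply ball_R; auto| auto].
Qed.

Lemma fin_eta (l : list nat) (P : nat -> R -> Prop) :
  (forall k e e', 0 < e' <= e -> P k e -> P k e') ->
  (forall k, In k l -> exists e, 0 < e /\ P k e) -> exists e, 0 < e /\ forall k, In k l -> P k e.
Proof.
  intros Hmono. induction l as [|x l IH]; intros H.
  - exists 1. split. lra. intros k [].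
  - destruct (H x) as [e1 [He1 P1]]. simpl; auto.
    destruct IH as [e2 [He2 P2]]. intros; apply H; simpl; auto.
    exists (Rmin e1 e2). split. apply Rmin_glb_lt; auto.
    intros k [<-|Hk]. apply Hmono with e1; auto. split. apply Rmin_glb_lt; auto. apply Rmin_l.
    apply Hmono with e2; auto. split. apply Rmin_glb_lt; auto. apply Rmin_r.
Qed.

Lemma traj_close h (Th : R -> nat -> R) :
  (forall j, (1 <= j <= S h)%nat -> forall t, 0 <= t ->
     filterlim (fun s => Th s j) (within (fun s => 0 <= s) (locally t)) (locally (Th t j))) ->
  forall t, 0 <= t -> forall d, 0 < d -> exists eta, 0 < eta /\
    forall s, 0 <= s -> Rabs (s - t) < eta -> closeT h (Th t) (Th s) d.
Proof.
  intros Hc t Ht d Hd.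
  destruct (fin_eta (seq 1 (S h)) (fun k eta => forall s, 0 <= s -> Rabs (s - t) < eta -> Rabs (Th s k - Th t k) < d)) as [eta [He HP]].
  - intros k e e' He' HP s Hs Hst. apply HP; auto. lra.
  - intros k Hk. apply in_seq1 in Hk. apply (within_eps (fun s => Th s k) t (Hc k Hk t Ht) d Hd).
  - exists eta. split; auto. intros s Hs Hst k Hk. apply HP; auto. apply in_seq1; auto.
Qed.

Definition gtraj a b h v w f p (Th : R -> nat -> R) j s := gfor a b h v w f p (Th (Rmax 0 s)) j.

Lemma gt_cont a b h v w (f p : R -> R) (Th : R -> nat -> R) j : a < b -> vpos h v w -> (forall x, continuous f x) ->
  (forall x, continuous p x) -> (forall x, 0 <= p x) -> (1 <= j <= S h)%nat ->
  (forall j, (1 <= j <= S h)%nat -> forall t, 0 <= t ->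
     filterlim (fun s => Th s j) (within (fun s => 0 <= s) (locally t)) (locally (Th t j))) ->
  forall s, continuous (gtraj a b h v w f p Th j) s.
Proof.
  intros Hab Hp Hf Hpc Hp0 Hj HTc s. apply cont_of_eps. intros eps He.
  set (t := Rmax 0 s). assert (Ht : 0 <= t) by apply Rmax_l.
  destruct (gfor_lip a b h v w f p (Th t) j) as [L [HL HLb]]; auto.
  assert (Hd : 0 < eps / (L + 1)) by (apply Rdiv_lt_0_compat; lra).
  destruct (traj_close h Th HTc t Ht (eps / (L+1)) Hd) as [eta [Heta Hcl]].
  exists eta. split; auto. intros y Hy. unfold gtraj. fold t.
  eapply Rle_lt_trans. apply (HLb _ (eps / (L+1))). lra. apply Hcl. apply Rmax_l.
  eapply Rle_lt_trans. apply (rmax_lip y s). auto.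
  apply Rle_lt_trans with (L * (eps / (L + 1))). right; ring.
  apply Rlt_le_trans with ((L+1) * (eps / (L + 1))). apply Rmult_lt_compat_r; lra. right; field; lra.
Qed.

Lemma traj_eq a b h v w (f p : R -> R) (Th : R -> nat -> R) j : a < b -> vpos h v w -> (forall x, continuous f x) ->
  (forall x, continuous p x) -> (forall x, 0 <= p x) -> (1 <= j <= S h)%nat ->
  (forall t, 0 <= t -> forall j, (1 <= j <= S h)%nat ->
     Th t j = Th 0 j - RInt (fun s => gradLoss a b h v w f p (Th s) j) 0 t) ->
  forall t, 0 <= t -> Th t j = Th 0 j - RInt (gtraj a b h v w f p Th j) 0 t.
Proof.
  intros Hab Hp Hf Hpc Hp0 Hj HI t Ht. rewrite HI; auto. f_equal. apply RInt_ext.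
  intros x Hx. rewrite Rmin_left, Rmax_right in Hx by lra. unfold gtraj. rewrite Rmax_right by lra.
  apply grad_eq; auto.
Qed.

Lemma traj_eq2 a b h v w (f p : R -> R) (Th : R -> nat -> R) j : a < b -> vpos h v w -> (forall x, continuous f x) ->
  (forall x, continuous p x) -> (forall x, 0 <= p x) -> (1 <= j <= S h)%nat ->
  (forall j, (1 <= j <= S h)%nat -> forall t, 0 <= t ->
     filterlim (fun s => Th s j) (within (fun s => 0 <= s) (locally t)) (locally (Th t j))) ->
  (forall t, 0 <= t -> forall j, (1 <= j <= S h)%nat ->
     Th t j = Th 0 j - RInt (fun s => gradLoss a b h v w f p (Th s) j) 0 t) ->
  forall T t, 0 <= T -> 0 <= t -> Th t j - Th T j = - RInt (gtraj a b h v w f p Th j) T t.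
Proof.
  intros Hab Hp Hf Hpc Hp0 Hj HTc HI T t HT Ht.
  rewrite (traj_eq a b h v w f p Th j Hab Hp Hf Hpc Hp0 Hj HI t Ht), (traj_eq a b h v w f p Th j Hab Hp Hf Hpc Hp0 Hj HI T HT).
  rewrite <- (RInt_ChaslesR _ 0 T t). ring. apply exR; apply gt_cont; auto. apply exR; apply gt_cont; auto.
Qed.

Lemma RInt_ge_const (G : R -> R) T t c : T <= t -> (forall x, continuous G x) -> (forall s, T < s < t -> c <= G s) ->
  (t - T) * c <= RInt G T t.
Proof. intros. rewrite <- RInt_constR. apply RInt_le_R; auto. intros; apply cR_const. Qed.
Lemma RInt_le_const (G : R -> R) T t c : T <= t -> (forall x, continuous G x) -> (forall s, T < s < t -> G s <= c) ->
  RInt G T t <= (t - T) * c.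
Proof. intros. rewrite <- RInt_constR. apply RInt_le_R; auto. intros; apply cR_const. Qed.

Lemma critical a b h v w (f p : R -> R) (Th : R -> nat -> R) (vt : nat -> R) j :
  a < b -> vpos h v w -> (forall x, continuous f x) ->
  (forall x, continuous p x) -> (forall x, 0 <= p x) -> (1 <= j <= S h)%nat ->
  (forall j, (1 <= j <= S h)%nat -> forall t, 0 <= t ->
     filterlim (fun s => Th s j) (within (fun s => 0 <= s) (locally t)) (locally (Th t j))) ->
  (forall t, 0 <= t -> forall j, (1 <= j <= S h)%nat ->
     Th t j = Th 0 j - RInt (fun s => gradLoss a b h v w f p (Th s) j) 0 t) ->
  is_lim (fun t => dist_h h (Th t) vt) p_infty 0 ->
  gfor a b h v w f p vt j = 0.
Proof.
  intros Hab Hp Hf Hpc Hp0 Hj HTc HI Hlim.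
  set (g := gfor a b h v w f p vt j).
  destruct (Req_dec g 0) as [|Hg]; auto. exfalso.
  destruct (gfor_lip a b h v w f p vt j) as [L [HL HLb]]; auto.
  assert (Hag : 0 < Rabs g) by (apply Rabs_pos_lt; auto).
  set (d := Rmin (Rabs g / (2 * (L + 1))) 1).
  assert (Hd : 0 < d) by (apply Rmin_glb_lt; [apply Rdiv_lt_0_compat; lra| lra]).
  assert (Hd1 : d <= 1) by apply Rmin_r.
  assert (Hd2 : L * d < Rabs g / 2).
  { apply Rle_lt_trans with (L * (Rabs g / (2 * (L + 1)))). apply Rmult_le_compat_l; auto. apply Rmin_l.
    apply Rlt_le_trans with ((L+1) * (Rabs g / (2 * (L + 1)))). apply Rmult_lt_compat_r. apply Rdiv_lt_0_compat; lra. lra.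
    right; field; lra. }
  destruct (conv_close h Th vt Hlim d Hd) as [T HT].
  set (T1 := Rmax 0 T + 1). assert (HT1 : T < T1 /\ 0 <= T1) by (unfold T1; pose proof (Rmax_l 0 T); pose proof (Rmax_r 0 T); lra).
  set (t := T1 + 4 / Rabs g). assert (Htt : T1 < t) by (unfold t; assert (0 < 4 / Rabs g) by (apply Rdiv_lt_0_compat; lra); lra).
  assert (Hgs : forall s, T1 < s < t -> Rabs (gtraj a b h v w f p Th j s - g) < Rabs g / 2).
  { intros s Hs. unfold gtraj. rewrite Rmax_right by lra. eapply Rle_lt_trans. apply (HLb _ d). lra. apply HT. lra. auto. }
  assert (Heq := traj_eq2 a b h v w f p Th j Hab Hp Hf Hpc Hp0 Hj HTc HI T1 t ltac:(lra) ltac:(lra)).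
  assert (C1 : Rabs (Th t j - vt j) < 1) by (pose proof (HT t ltac:(lra) j Hj); lra).
  assert (C2 : Rabs (Th T1 j - vt j) < 1) by (pose proof (HT T1 ltac:(lra) j Hj); lra).
  assert (cg : forall x, continuous (gtraj a b h v w f p Th j) x) by (apply gt_cont; auto).
  assert (Ht4 : (t - T1) * (Rabs g / 2) = 2) by (unfold t; field; lra).
  destruct (Rlt_dec 0 g) as [Hpos|Hneg].
  - rewrite Rabs_pos_eq in * by lra.
    assert ((t - T1) * (g / 2) <= RInt (gtraj a b h v w f p Th j) T1 t).
    { apply RInt_ge_const; auto. lra. intros s Hs. specialize (Hgs s Hs).
      pose proof (Rle_abs (-(gtraj a b h v w f p Th j s - g))). rewrite Rabs_Ropp in H. lra. }
    pose proof (Rle_abs (-(Th t j - vt j))). pose proof (Rle_abs (Th T1 j - vt j)). rewrite Rabs_Ropp in H0. lra.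
  - assert (g < 0) by lra. rewrite Rabs_left in * by lra.
    assert (RInt (gtraj a b h v w f p Th j) T1 t <= (t - T1) * (g / 2)).
    { apply RInt_le_const; auto. lra. intros s Hs. specialize (Hgs s Hs).
      pose proof (Rle_abs (gtraj a b h v w f p Th j s - g)). lra. }
    pose proof (Rle_abs (Th t j - vt j)). pose proof (Rle_abs (-(Th T1 j - vt j))). rewrite Rabs_Ropp in H2. lra.
Qed.

Lemma first_hit (g : R -> R) lo hi : (forall x, continuous g x) -> lo <= hi -> 0 < g lo -> g hi <= 0 ->
  exists m, lo < m <= hi /\ g m <= 0 /\ forall s, lo <= s < m -> 0 < g s.
Proof.
  intros Hc Hlh Hlo Hhi.
  set (E := fun t => lo <= t <= hi /\ forall s, lo <= s <= t -> 0 < g s).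
  destruct (completeness E) as [m [Hub Hlub]].
  { exists hi. intros t [Ht _]. lra. }
  { exists lo. split. lra. intros s Hs. replace s with lo by lra. auto. }
  assert (Hlm : lo <= m) by (apply Hub; split; [lra| intros s Hs; replace s with lo by lra; auto]).
  assert (Hmh : m <= hi) by (apply Hlub; intros t [Ht _]; lra).
  assert (Hbelow : forall s, lo <= s < m -> 0 < g s).
  { intros s Hs. destruct (Rle_dec m s) as [|Hn]; [lra|].
    assert (exists t, E t /\ s < t) as [t [[_ Ht] Hst]].
    { apply Classical_Pred_Type.not_all_not_ex. intros Hno. assert (m <= s). apply Hlub. intros t Et.
      destruct (Rle_dec t s); auto. exfalso; apply (Hno t); split; auto; lra. lra. }
    apply Ht. lra. }
  destruct (Rle_dec (g m) 0) as [Hgm|Hgm].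
  - exists m. split; [|split; auto]. split; auto.
    destruct (Req_dec lo m) as [<-|]; [lra| lra].
  - exfalso. assert (Hgm' : 0 < g m) by lra.
    destruct (eps_of_cont g m (Hc m) (g m) Hgm') as [eta [Heta Hn]].
    destruct (Req_dec m hi) as [->|Hmh']. lra.
    set (t := Rmin (m + eta/2) hi).
    assert (E t).
    { split. unfold t. split. apply Rmin_glb; lra. apply Rmin_r.
      intros s Hs. destruct (Rlt_dec s m). apply Hbelow; lra.
      assert (Rabs (g s - g m) < g m). apply Hn. unfold t in Hs. pose proof (Rmin_l (m + eta/2) hi).
      rewrite Rabs_pos_eq; lra.
      pose proof (Rle_abs (-(g s - g m))). rewrite Rabs_Ropp in H0. lra. }
    assert (t <= m) by (apply Hub; auto). unfold t in H0.
    assert (m < Rmin (m + eta / 2) hi) by (apply Rmin_glb_lt; lra). lra.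
Qed.

Lemma gronwall (y k : R -> R) : (forall x, continuous y x) -> (forall x, continuous k x) -> 0 < y 0 ->
  (forall t, 0 <= t -> y t = y 0 + RInt k 0 t) ->
  (forall t, 0 <= t -> exists eta K, 0 < eta /\ 0 <= K /\ forall s, 0 <= s -> Rabs (s - t) < eta -> Rabs (k s) <= K * Rmax 0 (y s)) ->
  forall t, 0 <= t -> 0 < y t.
Proof.
  intros Hy Hk Hy0 Heq Hloc t1 Ht1. destruct (Rlt_dec 0 (y t1)) as [|Hn]; auto. exfalso.
  destruct (first_hit y 0 t1 Hy Ht1 Hy0 ltac:(lra)) as [ts [[Hts1 Hts2] [Hyts Hpos]]].
  destruct (Hloc ts ltac:(lra)) as [eta [K [Heta [HK HkK]]]].
  set (dl := Rmin (Rmin (eta/2) (ts/2)) (1 / (2*K+2))).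
  assert (Hdl : 0 < dl) by (unfold dl; repeat apply Rmin_glb_lt; try apply Rdiv_lt_0_compat; lra).
  assert (Hdl1 : dl <= eta/2) by (unfold dl; eapply Rle_trans; [apply Rmin_l| apply Rmin_l]).
  assert (Hdl2 : dl <= ts/2) by (unfold dl; eapply Rle_trans; [apply Rmin_l| apply Rmin_r]).
  assert (Hdl3 : dl <= 1 / (2*K+2)) by (unfold dl; apply Rmin_r).
  destruct (continuity_ab_maj y (ts - dl) ts) as [tau [Htau1 Htau2]]. lra.
  { intros c _. apply continuity_pt_filterlim. apply Hy. }
  set (m := y tau).
  assert (Hm : 0 < m) by (apply Rlt_le_trans with (y (ts - dl)); [apply Hpos; lra| apply Htau1; lra]).
  assert (Htl : tau < ts) by (destruct (Req_dec tau ts) as [E|E]; [unfold m in Hm; rewrite E in Hm; lra| lra]).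
  assert (HI : y ts - y tau = RInt k tau ts).
  { rewrite (Heq ts), (Heq tau) by lra. rewrite <- (RInt_ChaslesR k 0 tau ts) by (apply exR; auto). ring. }
  assert (HR : (ts - tau) * (- (K * m)) <= RInt k tau ts).
  { apply RInt_ge_const; auto. lra. intros s Hs.
    assert (Rabs (k s) <= K * Rmax 0 (y s)) by (apply HkK; [lra| rewrite Rabs_left1 by lra; lra]).
    assert (Rmax 0 (y s) <= m) by (apply Rmax_lub; [lra| apply Htau1; lra]).
    pose proof (Rle_abs (- k s)). rewrite Rabs_Ropp in H1.
    assert (K * Rmax 0 (y s) <= K * m) by (apply Rmult_le_compat_l; auto). lra. }
  assert ((ts - tau) * (K * m) <= dl * (K * m)) by (apply Rmult_le_compat_r; [apply Rmult_le_pos; lra| lra]).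
  assert (dl * (K * m) <= (1 / (2*K+2)) * (K*m)) by (apply Rmult_le_compat_r; [apply Rmult_le_pos; lra| lra]).
  assert ((1 / (2*K+2)) * (K*m) <= m / 2).
  { replace (m/2) with ((1 / (2*K+2)) * ((K + 1) * m)) by (field; lra). apply Rmult_le_compat_l.
    left; apply Rdiv_lt_0_compat; lra. nra. }
  unfold m in *. lra.
Qed.

Lemma traj_coord_cont h (Th : R -> nat -> R) j :
  (forall j, (1 <= j <= S h)%nat -> forall t, 0 <= t ->
     filterlim (fun s => Th s j) (within (fun s => 0 <= s) (locally t)) (locally (Th t j))) ->
  (1 <= j <= S h)%nat -> forall s, continuous (fun s => Th (Rmax 0 s) j) s.
Proof.
  intros HTc Hj s. apply cont_of_eps. intros eps He.
  destruct (within_eps (fun s => Th s j) (Rmax 0 s) (HTc j Hj _ (Rmax_l 0 s)) eps He) as [eta [Heta Hn]].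
  exists eta. split; auto. intros y Hy. apply Hn. apply Rmax_l. eapply Rle_lt_trans. apply rmax_lip. auto.
Qed.

Lemma gfor_bound a b h v w (f p : R -> R) th i ME Mp : a < b -> vpos h v w -> (forall x, continuous f x) ->
  (forall x, continuous p x) -> (1 <= i <= h)%nat ->
  (forall x, a <= x <= b -> Rabs (Err h v w f th x) <= ME) -> (forall x, a <= x <= b -> Rabs (p x) <= Mp) ->
  Rabs (gfor a b h v w f p th i) <= 2 * v i * (ME * Mp) * (hi_ a b w th i - lo_ a b w th i).
Proof.
  intros Hab Hp Hf Hpc Hi HE HP. destruct (Hp i Hi) as [Hv Hw].
  destruct (lo_hi a b w th i) as [H1 H2]; auto. lra.
  unfold gfor. destruct (Nat.eqb_spec i (S h)). lia.
  rewrite Rabs_mult, (Rabs_pos_eq (2 * v i)) by lra.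
  apply Rle_trans with (2 * v i * ((hi_ a b w th i - lo_ a b w th i) * (ME * Mp))); [|right; ring].
  apply Rmult_le_compat_l. lra.
  apply abs_RInt_le_const. lra. apply exR; intros; apply EP_cont; auto.
  intros x Hx. unfold EP. rewrite Rabs_mult. apply Rmult_le_compat; try apply Rabs_pos; [apply HE| apply HP]; lra.
Qed.

Lemma width_left a b (w : nat -> R) th i : a <= b -> hi_ a b w th i - lo_ a b w th i <= Rmax 0 (psi w th i - (a - / w i)).
Proof.
  intros Hab. unfold lo_, hi_.
  destruct (clamp_spec a b (psi w th i) Hab) as [[C1 E1]|[[C1 E1]|[C1 E1]]];
  destruct (clamp_spec a b (psi w th i + / w i) Hab) as [[C2 E2]|[[C2 E2]|[C2 E2]]]; rewrite E1, E2;
  pose proof (Rmax_l 0 (psi w th i - (a - / w i))); pose proof (Rmax_r 0 (psi w th i - (a - / w i))); lra.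
Qed.

Lemma width_right a b (w : nat -> R) th i : a <= b -> hi_ a b w th i - lo_ a b w th i <= Rmax 0 (b - psi w th i).
Proof.
  intros Hab. unfold lo_, hi_.
  destruct (clamp_spec a b (psi w th i) Hab) as [[C1 E1]|[[C1 E1]|[C1 E1]]];
  destruct (clamp_spec a b (psi w th i + / w i) Hab) as [[C2 E2]|[[C2 E2]|[C2 E2]]]; rewrite E1, E2;
  pose proof (Rmax_l 0 (b - psi w th i)); pose proof (Rmax_r 0 (b - psi w th i)); lra.
Qed.

Lemma psi_close (w : nat -> R) th th' i : 0 < w i -> Rabs (psi w th' i - psi w th i) = / w i * Rabs (th' i - th i).
Proof.
  intros Hw. unfold psi. replace (- / w i * th' i - - / w i * th i) with (/ w i * (-(th' i - th i))) by ring.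
  rewrite Rabs_mult, Rabs_Ropp, Rabs_pos_eq; auto. left; apply Rinv_0_lt_compat; auto.
Qed.

Lemma local_gbound a b h v w (f p : R -> R) (Th : R -> nat -> R) i : a < b -> vpos h v w -> (forall x, continuous f x) ->
  (forall x, continuous p x) -> (1 <= i <= h)%nat ->
  (forall j, (1 <= j <= S h)%nat -> forall t, 0 <= t ->
     filterlim (fun s => Th s j) (within (fun s => 0 <= s) (locally t)) (locally (Th t j))) ->
  forall t, 0 <= t -> exists eta K, 0 < eta /\ 0 <= K /\ forall s, 0 <= s -> Rabs (s - t) < eta ->
    Rabs (gfor a b h v w f p (Th s) i) <= K * (hi_ a b w (Th s) i - lo_ a b w (Th s) i).
Proof.
  intros Hab Hp Hf Hpc Hi HTc t Ht.
  destruct (bounded_on (Err h v w f (Th t)) a b) as [M [HM HMb]]. lra. intros; apply Err_cont; auto.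
  destruct (bounded_on p a b) as [Mp [HMp Hpb]]; auto. lra.
  destruct (traj_close h Th HTc t Ht 1 ltac:(lra)) as [eta [Heta Hcl]].
  destruct (Hp i Hi) as [Hv Hw]. pose proof (sumv_nonneg h v w Hp).
  exists eta, (2 * v i * ((M + (1 + sumv h v) * 1) * Mp)). split; auto. split. apply Rmult_le_pos. lra. nra.
  intros s Hs Hst. refine (gfor_bound a b h v w f p (Th s) i (M + (1 + sumv h v) * 1) Mp _ _ _ _ _ _ _); auto.
  intros x Hx. unfold Err. replace (NN h v w (Th s) x - f x) with ((NN h v w (Th s) x - NN h v w (Th t) x) + (NN h v w (Th t) x - f x)) by ring.
  eapply Rle_trans. apply Rabs_triang. pose proof (NN_close h v w (Th t) (Th s) x 1 Hp (Hcl s Hs Hst)). pose proof (HMb x Hx). unfold Err in H1. lra.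
Qed.

Lemma psi_traj a b h v w (f p : R -> R) (Th : R -> nat -> R) i : a < b -> vpos h v w -> (forall x, continuous f x) ->
  (forall x, continuous p x) -> (forall x, 0 <= p x) -> (1 <= i <= h)%nat ->
  (forall j, (1 <= j <= S h)%nat -> forall t, 0 <= t ->
     filterlim (fun s => Th s j) (within (fun s => 0 <= s) (locally t)) (locally (Th t j))) ->
  (forall t, 0 <= t -> forall j, (1 <= j <= S h)%nat ->
     Th t j = Th 0 j - RInt (fun s => gradLoss a b h v w f p (Th s) j) 0 t) ->
  forall T t, 0 <= T -> 0 <= t -> psi w (Th t) i - psi w (Th T) i = / w i * RInt (gtraj a b h v w f p Th i) T t.
Proof.
  intros Hab Hp Hf Hpc Hp0 Hi HTc HI T t HT Ht. unfold psi.
  replace (- / w i * Th t i - - / w i * Th T i) with (- / w i * (Th t i - Th T i)) by ring.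
  rewrite (traj_eq2 a b h v w f p Th i Hab Hp Hf Hpc Hp0 ltac:(lia) HTc HI T t HT Ht). ring.
Qed.

Lemma psi_lim h (w : nat -> R) (Th : R -> nat -> R) vt i : (1 <= i <= h)%nat -> 0 < w i ->
  is_lim (fun t => dist_h h (Th t) vt) p_infty 0 ->
  forall e, 0 < e -> exists T, forall t, T < t -> Rabs (psi w (Th t) i - psi w vt i) < e.
Proof.
  intros Hi Hw Hl e He. destruct (conv_close h Th vt Hl (w i * e)) as [T HT]. apply Rmult_lt_0_compat; auto.
  exists T. intros t Ht. rewrite psi_close by auto. specialize (HT t Ht i ltac:(lia)).
  apply Rlt_le_trans with (/ w i * (w i * e)). apply Rmult_lt_compat_l; auto. apply Rinv_0_lt_compat; auto.
  right; field; lra.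
Qed.

Lemma no_exit_left a b h v w (f p : R -> R) (Th : R -> nat -> R) (vt : nat -> R) i :
  a < b -> vpos h v w -> (forall x, continuous f x) ->
  (forall x, continuous p x) -> (forall x, 0 <= p x) -> (1 <= i <= h)%nat ->
  (forall j, (1 <= j <= S h)%nat -> forall t, 0 <= t ->
     filterlim (fun s => Th s j) (within (fun s => 0 <= s) (locally t)) (locally (Th t j))) ->
  (forall t, 0 <= t -> forall j, (1 <= j <= S h)%nat ->
     Th t j = Th 0 j - RInt (fun s => gradLoss a b h v w f p (Th s) j) 0 t) ->
  is_lim (fun t => dist_h h (Th t) vt) p_infty 0 ->
  a - / w i < psi w (Th 0) i -> 0 < Err h v w f vt a -> a - / w i < psi w vt i.
Proof.
  intros Hab Hp Hf Hpc Hp0 Hi HTc HI Hlim H0 He.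
  destruct (Hp i Hi) as [Hv Hw]. assert (Hiw : 0 < / w i) by (apply Rinv_0_lt_compat; auto).
  set (al := a - / w i) in *.
  assert (cg : forall x, continuous (gtraj a b h v w f p Th i) x) by (apply gt_cont; auto; lia).
  assert (S1 : forall t, 0 <= t -> al < psi w (Th t) i).
  { set (y := fun s => psi w (Th (Rmax 0 s)) i - al).
    set (k := fun s => / w i * gtraj a b h v w f p Th i s).
    assert (Hy : forall t, 0 <= t -> y t = psi w (Th t) i - al) by (intros; unfold y; rewrite Rmax_right; auto).
    intros t Ht. cut (0 < y t). rewrite Hy; auto. lra.
    apply (gronwall y k).
    - intros x. unfold y, psi. apply cR_minus. apply cR_mult. apply cR_const. apply (traj_coord_cont h Th i HTc ltac:(lia)). apply cR_const.
    - intros x. unfold k. apply cR_mult; auto. apply cR_const.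
    - rewrite Hy by lra. lra.
    - intros t0 Ht0. rewrite !Hy by lra. unfold k. rewrite RInt_scalR by (apply exR; auto).
      rewrite <- (psi_traj a b h v w f p Th i Hab Hp Hf Hpc Hp0 Hi HTc HI 0 t0) by lra. ring.
    - intros t0 Ht0. destruct (local_gbound a b h v w f p Th i Hab Hp Hf Hpc Hi HTc t0 Ht0) as [eta [K [Heta [HK HB]]]].
      exists eta, (/ w i * K). split; auto. split. apply Rmult_le_pos; lra.
      intros s Hs Hst. unfold k, gtraj. rewrite Rmax_right by auto. rewrite Hy by auto.
      rewrite Rabs_mult, Rabs_pos_eq by lra. rewrite Rmult_assoc. apply Rmult_le_compat_l. lra.
      eapply Rle_trans. apply HB; auto. apply Rmult_le_compat_l; auto. apply width_left. lra.
    - auto. }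
  destruct (Rlt_dec al (psi w vt i)) as [|Hn]; auto. exfalso.
  destruct (eps_of_cont (Err h v w f vt) a (Err_cont h v w f vt a Hp Hf) (Err h v w f vt a / 2) ltac:(lra)) as [e0 [He0 Hc0]].
  set (eps := Rmin e0 (Rmin (/ w i) (b - a))).
  assert (Heps : 0 < eps) by (unfold eps; repeat apply Rmin_glb_lt; lra).
  assert (Heps1 : eps <= e0) by apply Rmin_l.
  assert (Heps2 : eps <= / w i) by (unfold eps; eapply Rle_trans; [apply Rmin_r| apply Rmin_l]).
  assert (Heps3 : eps <= b - a) by (unfold eps; eapply Rle_trans; [apply Rmin_r| apply Rmin_r]).
  set (C := 1 + sumv h v). assert (HC : 0 <= C) by (unfold C; pose proof (sumv_nonneg h v w Hp); lra).
  set (d := Err h v w f vt a / (2 * (C + 1))). assert (Hd : 0 < d) by (unfold d; apply Rdiv_lt_0_compat; lra).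
  assert (HCd : C * d < Err h v w f vt a / 2).
  { apply Rlt_le_trans with ((C+1) * d). apply Rmult_lt_compat_r; lra. unfold d. right; field; lra. }
  destruct (conv_close h Th vt Hlim d Hd) as [T1 HT1].
  destruct (psi_lim h w Th vt i Hi Hw Hlim (eps/2) ltac:(lra)) as [T2 HT2].
  set (T := Rmax 0 (Rmax T1 T2) + 1).
  assert (HT : 0 <= T /\ T1 < T /\ T2 < T) by (unfold T; pose proof (Rmax_l 0 (Rmax T1 T2)); pose proof (Rmax_r 0 (Rmax T1 T2));
     pose proof (Rmax_l T1 T2); pose proof (Rmax_r T1 T2); lra).
  assert (S3 : forall t, T < t -> 0 <= gtraj a b h v w f p Th i t).
  { intros t Ht. unfold gtraj. rewrite Rmax_right by lra.
    assert (Hpt : psi w (Th t) i < al + eps / 2).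
    { specialize (HT2 t ltac:(lra)). pose proof (Rle_abs (psi w (Th t) i - psi w vt i)). lra. }
    assert (Hpt2 : al < psi w (Th t) i) by (apply S1; lra).
    destruct (lo_hi a b w (Th t) i) as [H1 H2]; auto. lra.
    assert (Hhi : hi_ a b w (Th t) i <= psi w (Th t) i + / w i).
    { unfold hi_. apply Rmax_lub. unfold al in *. lra. apply Rmin_r. }
    unfold gfor. destruct (Nat.eqb_spec i (S h)). lia.
    apply Rmult_le_pos. lra. rewrite <- (Rmult_0_r (hi_ a b w (Th t) i - lo_ a b w (Th t) i)).
    apply RInt_ge_const. lra. intros; apply EP_cont; auto.
    intros x Hx. unfold EP. apply Rmult_le_pos; auto.
    assert (Hx0 : Rabs (x - a) < e0) by (rewrite Rabs_pos_eq; unfold al in *; lra).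
    specialize (Hc0 x Hx0).
    pose proof (NN_close h v w vt (Th t) x d Hp (HT1 t ltac:(lra))).
    unfold Err in *. pose proof (Rle_abs (-(NN h v w vt x - f x - (NN h v w vt a - f a)))). rewrite Rabs_Ropp in H3.
    pose proof (Rle_abs (-(NN h v w (Th t) x - NN h v w vt x))). rewrite Rabs_Ropp in H4.
    fold C in H. lra. }
  set (P1 := psi w (Th T) i).
  assert (S4 : forall t, T <= t -> P1 <= psi w (Th t) i).
  { intros t Ht. unfold P1. cut (0 <= psi w (Th t) i - psi w (Th T) i). lra.
    rewrite (psi_traj a b h v w f p Th i Hab Hp Hf Hpc Hp0 Hi HTc HI T t) by lra.
    apply Rmult_le_pos. lra. rewrite <- (Rmult_0_r (t - T)). apply RInt_ge_const; auto. intros; apply S3; lra. }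
  assert (HP1 : al < P1) by (apply S1; lra).
  destruct (psi_lim h w Th vt i Hi Hw Hlim (P1 - psi w vt i) ltac:(lra)) as [T3 HT3].
  set (t := Rmax T T3 + 1).
  specialize (HT3 t ltac:(unfold t; pose proof (Rmax_r T T3); lra)).
  specialize (S4 t ltac:(unfold t; pose proof (Rmax_l T T3); lra)).
  pose proof (Rle_abs (psi w (Th t) i - psi w vt i)). lra.
Qed.

Lemma no_exit_right a b h v w (f p : R -> R) (Th : R -> nat -> R) (vt : nat -> R) i :
  a < b -> vpos h v w -> (forall x, continuous f x) ->
  (forall x, continuous p x) -> (forall x, 0 <= p x) -> (1 <= i <= h)%nat ->
  (forall j, (1 <= j <= S h)%nat -> forall t, 0 <= t ->
     filterlim (fun s => Th s j) (within (fun s => 0 <= s) (locally t)) (locally (Th t j))) ->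
  (forall t, 0 <= t -> forall j, (1 <= j <= S h)%nat ->
     Th t j = Th 0 j - RInt (fun s => gradLoss a b h v w f p (Th s) j) 0 t) ->
  is_lim (fun t => dist_h h (Th t) vt) p_infty 0 ->
  psi w (Th 0) i < b -> Err h v w f vt b < 0 -> psi w vt i < b.
Proof.
  intros Hab Hp Hf Hpc Hp0 Hi HTc HI Hlim H0 He.
  destruct (Hp i Hi) as [Hv Hw]. assert (Hiw : 0 < / w i) by (apply Rinv_0_lt_compat; auto).
  assert (cg : forall x, continuous (gtraj a b h v w f p Th i) x) by (apply gt_cont; auto; lia).
  assert (S1 : forall t, 0 <= t -> psi w (Th t) i < b).
  { set (y := fun s => b - psi w (Th (Rmax 0 s)) i).
    set (k := fun s => - / w i * gtraj a b h v w f p Th i s).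
    assert (Hy : forall t, 0 <= t -> y t = b - psi w (Th t) i) by (intros; unfold y; rewrite Rmax_right; auto).
    intros t Ht. cut (0 < y t). rewrite Hy; auto. lra.
    apply (gronwall y k).
    - intros x. unfold y, psi. apply cR_minus. apply cR_const. apply cR_mult. apply cR_const. apply (traj_coord_cont h Th i HTc ltac:(lia)).
    - intros x. unfold k. apply cR_mult; auto. apply cR_const.
    - rewrite Hy by lra. lra.
    - intros t0 Ht0. rewrite !Hy by lra. unfold k. rewrite RInt_scalR by (apply exR; auto).
      pose proof (psi_traj a b h v w f p Th i Hab Hp Hf Hpc Hp0 Hi HTc HI 0 t0 ltac:(lra) Ht0). lra.
    - intros t0 Ht0. destruct (local_gbound a b h v w f p Th i Hab Hp Hf Hpc Hi HTc t0 Ht0) as [eta [K [Heta [HK HB]]]].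
      exists eta, (/ w i * K). split; auto. split. apply Rmult_le_pos; lra.
      intros s Hs Hst. unfold k, gtraj. rewrite Rmax_right by auto. rewrite Hy by auto.
      rewrite Rabs_mult, Rabs_Ropp, Rabs_pos_eq by lra. rewrite Rmult_assoc. apply Rmult_le_compat_l. lra.
      eapply Rle_trans. apply HB; auto. apply Rmult_le_compat_l; auto. apply width_right. lra.
    - auto. }
  destruct (Rlt_dec (psi w vt i) b) as [|Hn]; auto. exfalso.
  destruct (eps_of_cont (Err h v w f vt) b (Err_cont h v w f vt b Hp Hf) (- Err h v w f vt b / 2) ltac:(lra)) as [e0 [He0 Hc0]].
  set (eps := Rmin e0 (b - a)).
  assert (Heps : 0 < eps) by (unfold eps; repeat apply Rmin_glb_lt; lra).
  assert (Heps1 : eps <= e0) by apply Rmin_l.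
  assert (Heps3 : eps <= b - a) by (unfold eps; apply Rmin_r).
  set (C := 1 + sumv h v). assert (HC : 0 <= C) by (unfold C; pose proof (sumv_nonneg h v w Hp); lra).
  set (d := - Err h v w f vt b / (2 * (C + 1))). assert (Hd : 0 < d) by (unfold d; apply Rdiv_lt_0_compat; lra).
  assert (HCd : C * d < - Err h v w f vt b / 2).
  { apply Rlt_le_trans with ((C+1) * d). apply Rmult_lt_compat_r; lra. unfold d. right; field; lra. }
  destruct (conv_close h Th vt Hlim d Hd) as [T1 HT1].
  destruct (psi_lim h w Th vt i Hi Hw Hlim (eps/2) ltac:(lra)) as [T2 HT2].
  set (T := Rmax 0 (Rmax T1 T2) + 1).
  assert (HT : 0 <= T /\ T1 < T /\ T2 < T) by (unfold T; pose proof (Rmax_l 0 (Rmax T1 T2)); pose proof (Rmax_r 0 (Rmax T1 T2));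
     pose proof (Rmax_l T1 T2); pose proof (Rmax_r T1 T2); lra).
  assert (S3 : forall t, T < t -> gtraj a b h v w f p Th i t <= 0).
  { intros t Ht. unfold gtraj. rewrite Rmax_right by lra.
    assert (Hpt : b - eps / 2 < psi w (Th t) i).
    { specialize (HT2 t ltac:(lra)). pose proof (Rle_abs (-(psi w (Th t) i - psi w vt i))). rewrite Rabs_Ropp in H. lra. }
    assert (Hpt2 : psi w (Th t) i < b) by (apply S1; lra).
    destruct (lo_hi a b w (Th t) i) as [H1 H2]; auto. lra.
    assert (Hlo : psi w (Th t) i <= lo_ a b w (Th t) i).
    { unfold lo_. eapply Rle_trans; [|apply Rmax_r]. rewrite Rmin_right; lra. }
    unfold gfor. destruct (Nat.eqb_spec i (S h)). lia.
    cut (RInt (EP h v w f p (Th t)) (lo_ a b w (Th t) i) (hi_ a b w (Th t) i) <= 0).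
    { intros. assert (0 <= 2 * v i) by lra. nra. }
    rewrite <- (Rmult_0_r (hi_ a b w (Th t) i - lo_ a b w (Th t) i)).
    apply RInt_le_const. lra. intros; apply EP_cont; auto.
    intros x Hx. unfold EP. cut (Err h v w f (Th t) x <= 0). intros. pose proof (Hp0 x). nra.
    assert (Hx0 : Rabs (x - b) < e0) by (rewrite Rabs_left1; lra).
    specialize (Hc0 x Hx0).
    pose proof (NN_close h v w vt (Th t) x d Hp (HT1 t ltac:(lra))).
    unfold Err in *. pose proof (Rle_abs (NN h v w vt x - f x - (NN h v w vt b - f b))).
    pose proof (Rle_abs (NN h v w (Th t) x - NN h v w vt x)).
    fold C in H. lra. }
  set (P1 := psi w (Th T) i).
  assert (S4 : forall t, T <= t -> psi w (Th t) i <= P1).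
  { intros t Ht. unfold P1. cut (psi w (Th t) i - psi w (Th T) i <= 0). lra.
    rewrite (psi_traj a b h v w f p Th i Hab Hp Hf Hpc Hp0 Hi HTc HI T t) by lra.
    cut (RInt (gtraj a b h v w f p Th i) T t <= 0). intros; nra.
    rewrite <- (Rmult_0_r (t - T)). apply RInt_le_const; auto. intros; apply S3; lra. }
  assert (HP1 : P1 < b) by (apply S1; lra).
  destruct (psi_lim h w Th vt i Hi Hw Hlim (psi w vt i - P1) ltac:(lra)) as [T3 HT3].
  set (t := Rmax T T3 + 1).
  specialize (HT3 t ltac:(unfold t; pose proof (Rmax_r T T3); lra)).
  specialize (S4 t ltac:(unfold t; pose proof (Rmax_l T T3); lra)).
  pose proof (Rle_abs (-(psi w (Th t) i - psi w vt i))). rewrite Rabs_Ropp in H. lra.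
Qed.

Lemma min_vw_le h (v w : nat -> R) i : (1 <= i <= h)%nat -> min_vw h v w <= v i * w i.
Proof.
  intros Hi. unfold min_vw. assert (In i (seq 1 h)) by (apply in_seq1; auto).
  generalize (v 1%nat * w 1%nat). induction (seq 1 h) as [|x l IH]. contradiction.
  intros r. simpl. destruct H as [<-|H]. apply Rmin_l. eapply Rle_trans. apply Rmin_r. apply IH; auto.
Qed.

Lemma Lip_bound (f : R -> R) a b h v w i : Rbar_lt (Lip f a b) (Finite (min_vw h v w)) -> (1 <= i <= h)%nat ->
  forall x y, a <= x -> x < y -> y <= b -> f y - f x < v i * w i * (y - x).
Proof.
  intros HL Hi x y Hx Hxy Hy.
  assert (Hr : Rbar_le (Rabs (f x - f y) / Rabs (x - y)) (Lip f a b)).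
  { unfold Lip. apply Lub_Rbar_correct. exists x, y. repeat split; try lra. }
  assert (Hr2 : Rabs (f x - f y) / Rabs (x - y) < min_vw h v w).
  { destruct (Lip f a b); simpl in *; try contradiction; lra. }
  pose proof (min_vw_le h v w i Hi).
  rewrite Rabs_minus_sym, (Rabs_minus_sym x), (Rabs_pos_eq (y - x)) in Hr2 by lra.
  apply Rmult_lt_compat_r with (r := y - x) in Hr2; [|lra].
  unfold Rdiv in Hr2. rewrite Rmult_assoc, Rinv_l, Rmult_1_r in Hr2 by lra.
  pose proof (Rle_abs (f y - f x)). nra.
Qed.

Definition actv (w : nat -> R) th i x := psi w th i < x < psi w th i + / w i.

Lemma ind_open_1 l u x : l < x < u -> ind_open l u x = 1.
Proof. intros. unfold ind_open. destruct Rlt_dec; [destruct Rlt_dec|]; lra. Qed.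
Lemma ind_open_range l u x : 0 <= ind_open l u x <= 1.
Proof. unfold ind_open. repeat destruct Rlt_dec; lra. Qed.
Lemma ind_open_0 l u x : ~ (l < x < u) -> ind_open l u x = 0.
Proof. intros. unfold ind_open. destruct Rlt_dec; [destruct Rlt_dec|]; auto; lra. Qed.

Definition Vfun a b h (v w : nat -> R) th x :=
  sum1 h (fun i => v i * (ind_open (psi w th i) (psi w th i + / (w i)) x * ind_open a b x)).

Lemma V_ge a b h v w th x : vpos h v w -> a < x < b -> Vfun a b h v w th x <= Vsup a b h v w th.
Proof.
  intros Hp Hx. unfold Vsup.
  set (S := fun r => exists x, a < x < b /\ r = Vfun a b h v w th x).
  change (Vfun a b h v w th x <= real (Lub_Rbar S)).
  assert (Hub : forall r, S r -> r <= sumv h v).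
  { intros r [y [_ ->]]. unfold Vfun, sumv. rewrite !sum1_lsum. apply lsum_le. intros i Hi. apply in_seq1 in Hi.
    destruct (Hp i Hi). pose proof (ind_open_range (psi w th i) (psi w th i + / w i) y). pose proof (ind_open_range a b y).
    assert (0 <= ind_open (psi w th i) (psi w th i + / w i) y * ind_open a b y <= 1) by (split; nra).
    rewrite <- (Rmult_1_r (v i)) at 2. apply Rmult_le_compat_l; lra. }
  destruct (Lub_Rbar_correct S) as [H1 H2].
  assert (Hin : S (Vfun a b h v w th x)) by (exists x; auto).
  specialize (H1 _ Hin). specialize (H2 (Finite (sumv h v))). fold S.
  assert (Rbar_le (Lub_Rbar S) (sumv h v)). apply H2. intros r Hr. simpl. apply Hub; auto.
  destruct (Lub_Rbar S); simpl in *; try contradiction; auto.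
Qed.

Lemma Vsup_nonneg a b h v w th : a < b -> vpos h v w -> 0 <= Vsup a b h v w th.
Proof.
  intros Hab Hp. eapply Rle_trans; [|apply (V_ge a b h v w th ((a+b)/2)); auto; lra].
  unfold Vfun. apply lsum_nonneg. intros i Hi. apply in_seq1 in Hi. destruct (Hp i Hi).
  pose proof (ind_open_range (psi w th i) (psi w th i + / w i) ((a+b)/2)). pose proof (ind_open_range a b ((a+b)/2)).
  apply Rmult_le_pos. lra. apply Rmult_le_pos; lra.
Qed.

Lemma aff_psi (w : nat -> R) th i y : 0 < w i -> w i * y + th i = w i * (y - psi w th i).
Proof. intros. unfold psi. field. lra. Qed.

Lemma first_hit2 (g : R -> R) lo hi : (forall x, continuous g x) -> lo < hi -> 0 < g lo ->
  exists m, lo < m <= hi /\ (m = hi \/ g m <= 0) /\ forall s, lo <= s < m -> 0 < g s.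
Proof.
  intros Hc Hlh Hlo.
  destruct (Classical_Prop.classic (exists s, lo <= s <= hi /\ g s <= 0)) as [[s1 [Hs1 Hg1]]|Hno].
  - destruct (first_hit g lo s1 Hc ltac:(lra) Hlo Hg1) as [m [Hm1 [Hm2 Hm3]]].
    exists m. split. lra. split; auto.
  - exists hi. split. lra. split. auto. intros s Hs. destruct (Rlt_dec 0 (g s)); auto. exfalso. apply Hno. exists s. split; lra.
Qed.

Lemma clip_actv (w : nat -> R) th i y : 0 < w i -> actv w th i y -> clip (w i * y + th i) = w i * (y - psi w th i).
Proof.
  intros Hw [H1 H2]. rewrite aff_psi by auto. apply clip_id. split. nra.
  assert (w i * (y - psi w th i) < w i * / w i) by (apply Rmult_lt_compat_l; lra).
  rewrite Rinv_r in H by lra. lra.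
Qed.

Lemma N_incr_lb h v w th i u q : vpos h v w -> (1 <= i <= h)%nat -> actv w th i u -> actv w th i q -> u <= q ->
  v i * w i * (q - u) <= NN h v w th q - NN h v w th u.
Proof.
  intros Hp Hi Hu Hq Huq. destruct (Hp i Hi) as [Hv Hw]. rewrite NN_diff. rewrite sum1_lsum.
  eapply Rle_trans; [|apply (lsum_le_single _ (fun j => v j * (clip (w j * q + th j) - clip (w j * u + th j))) i)].
  rewrite !clip_actv by auto. right; ring. apply in_seq1; auto.
  intros j Hj. apply in_seq1 in Hj. destruct (Hp j Hj). apply Rmult_le_pos. lra.
  cut (clip (w j * u + th j) <= clip (w j * q + th j)). lra. apply clip_mono. nra.
Qed.

Lemma E_incr a b h v w (f : R -> R) th i u q : vpos h v w -> (1 <= i <= h)%nat ->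
  Rbar_lt (Lip f a b) (Finite (min_vw h v w)) ->
  actv w th i u -> actv w th i q -> a <= u -> u < q -> q <= b -> Err h v w f th u < Err h v w f th q.
Proof.
  intros Hp Hi HL Hu Hq Ha Huq Hb. pose proof (N_incr_lb h v w th i u q Hp Hi Hu Hq ltac:(lra)).
  pose proof (Lip_bound f a b h v w i HL Hi u q Ha Huq Hb). unfold Err. lra.
Qed.

Lemma actv_lo_hi a b (w : nat -> R) th i x : a < b -> 0 < w i -> a < x < b ->
  (actv w th i x <-> lo_ a b w th i < x < hi_ a b w th i).
Proof.
  intros Hab Hw Hx. unfold actv, lo_, hi_. assert (0 < / w i) by (apply Rinv_0_lt_compat; auto).
  destruct (clamp_spec a b (psi w th i) ltac:(lra)) as [[C1 E1]|[[C1 E1]|[C1 E1]]];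
  destruct (clamp_spec a b (psi w th i + / w i) ltac:(lra)) as [[C2 E2]|[[C2 E2]|[C2 E2]]]; rewrite E1, E2; split; intros; lra.
Qed.

Lemma EP_pos_int a b h v w (f p : R -> R) th lo hi : vpos h v w -> (forall x, continuous f x) -> (forall x, continuous p x) ->
  (forall x, 0 < p x <-> a < x < b) -> a <= lo -> lo < hi -> hi <= b ->
  (forall x, lo < x < hi -> 0 < Err h v w f th x) -> 0 < RInt (EP h v w f p th) lo hi.
Proof.
  intros Hp Hf Hpc Hpos H1 H2 H3 HE. apply RInt_gt_0; auto.
  intros x Hx. unfold EP. apply Rmult_lt_0_compat. auto. apply Hpos; lra.
  intros; apply EP_cont; auto.
Qed.

Lemma EP_neg_int a b h v w (f p : R -> R) th lo hi : vpos h v w -> (forall x, continuous f x) -> (forall x, continuous p x) ->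
  (forall x, 0 < p x <-> a < x < b) -> a <= lo -> lo < hi -> hi <= b ->
  (forall x, lo < x < hi -> Err h v w f th x < 0) -> RInt (EP h v w f p th) lo hi < 0.
Proof.
  intros Hp Hf Hpc Hpos H1 H2 H3 HE.
  assert (0 < RInt (fun x => -1 * EP h v w f p th x) lo hi).
  { apply RInt_gt_0; auto. intros x Hx. unfold EP. assert (0 < p x) by (apply Hpos; lra). specialize (HE x Hx). nra.
    intros; apply cR_mult. apply cR_const. apply EP_cont; auto. }
  rewrite RInt_scalR in H by (apply exR; intros; apply EP_cont; auto). lra.
Qed.

Lemma exists_nonpos a b h v w (f p : R -> R) th i u : a < b -> vpos h v w -> (forall x, continuous f x) ->
  (forall x, continuous p x) -> (forall x, 0 < p x <-> a < x < b) -> Rbar_lt (Lip f a b) (Finite (min_vw h v w)) ->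
  (1 <= i <= h)%nat -> RInt (EP h v w f p th) (lo_ a b w th i) (hi_ a b w th i) = 0 ->
  a < u < b -> actv w th i u -> 0 < Err h v w f th u ->
  exists q, a < q < u /\ actv w th i q /\ Err h v w f th q <= 0.
Proof.
  intros Hab Hp Hf Hpc Hpos HL Hi Hc Hu Ha HE. destruct (Hp i Hi) as [Hv Hw].
  destruct (lo_hi a b w th i) as [Hl1 Hl2]; auto. lra.
  pose proof (proj1 (actv_lo_hi a b w th i u Hab Hw Hu) Ha) as Hlu.
  destruct (Classical_Prop.classic (exists q, lo_ a b w th i < q < hi_ a b w th i /\ Err h v w f th q <= 0)) as [[q [Hq1 Hq2]]|Hno].
  - assert (Hqab : a < q < b) by lra.
    assert (Haq : actv w th i q) by (apply (actv_lo_hi a b w th i q Hab Hw Hqab); auto).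
    exists q. split; [|split; auto]. split. lra.
    destruct (Rlt_dec q u) as [|Hn]; auto. exfalso. destruct (Req_dec q u) as [->|Hne]. lra.
    pose proof (E_incr a b h v w f th i u q Hp Hi HL Ha Haq ltac:(lra) ltac:(lra) ltac:(lra)). lra.
  - exfalso. assert (0 < RInt (EP h v w f p th) (lo_ a b w th i) (hi_ a b w th i)). apply (EP_pos_int a b); auto; try lra.
    intros x Hx. destruct (Rlt_dec 0 (Err h v w f th x)); auto. exfalso; apply Hno. exists x. split; auto. lra.
    lra.
Qed.

Lemma exists_nonneg a b h v w (f p : R -> R) th i u : a < b -> vpos h v w -> (forall x, continuous f x) ->
  (forall x, continuous p x) -> (forall x, 0 < p x <-> a < x < b) -> Rbar_lt (Lip f a b) (Finite (min_vw h v w)) ->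
  (1 <= i <= h)%nat -> RInt (EP h v w f p th) (lo_ a b w th i) (hi_ a b w th i) = 0 ->
  a < u < b -> actv w th i u -> Err h v w f th u < 0 ->
  exists q, u < q < b /\ actv w th i q /\ 0 <= Err h v w f th q.
Proof.
  intros Hab Hp Hf Hpc Hpos HL Hi Hc Hu Ha HE. destruct (Hp i Hi) as [Hv Hw].
  destruct (lo_hi a b w th i) as [Hl1 Hl2]; auto. lra.
  pose proof (proj1 (actv_lo_hi a b w th i u Hab Hw Hu) Ha) as Hlu.
  destruct (Classical_Prop.classic (exists q, lo_ a b w th i < q < hi_ a b w th i /\ 0 <= Err h v w f th q)) as [[q [Hq1 Hq2]]|Hno].
  - assert (Hqab : a < q < b) by lra.
    assert (Haq : actv w th i q) by (apply (actv_lo_hi a b w th i q Hab Hw Hqab); auto).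
    exists q. split; [|split; auto]. split; [|lra].
    destruct (Rlt_dec u q) as [|Hn]; auto. exfalso. destruct (Req_dec q u) as [->|Hne]. lra.
    pose proof (E_incr a b h v w f th i q u Hp Hi HL Haq Ha ltac:(lra) ltac:(lra) ltac:(lra)). lra.
  - exfalso. assert (RInt (EP h v w f p th) (lo_ a b w th i) (hi_ a b w th i) < 0). apply (EP_neg_int a b); auto; try lra.
    intros x Hx. destruct (Rlt_dec (Err h v w f th x) 0); auto. exfalso; apply Hno. exists x. split; auto. lra.
    lra.
Qed.

Lemma clip_change (w : nat -> R) th j y1 y2 : 0 < w j -> y1 < y2 ->
  clip (w j * y1 + th j) <> clip (w j * y2 + th j) -> exists u, y1 < u < y2 /\ actv w th j u.
Proof.
  intros Hw Hy Hne. rewrite !aff_psi in Hne by auto. set (ps := psi w th j) in *.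
  assert (Hiw : 0 < / w j) by (apply Rinv_0_lt_compat; auto).
  assert (A1 : ps < y2).
  { destruct (Rlt_dec ps y2); auto. exfalso. apply Hne. rewrite !clip_0; auto; nra. }
  assert (A2 : y1 < ps + / w j).
  { destruct (Rlt_dec y1 (ps + / w j)); auto. exfalso. apply Hne.
    assert (w j * (ps + / w j - ps) = 1) by (field; lra).
    rewrite !clip_1; auto. nra. nra. }
  exists ((Rmax y1 ps + Rmin y2 (ps + / w j)) / 2).
  assert (Rmax y1 ps < Rmin y2 (ps + / w j)).
  { apply Rmax_lub_lt; apply Rmin_glb_lt; lra. }
  pose proof (Rmax_l y1 ps). pose proof (Rmax_r y1 ps). pose proof (Rmin_l y2 (ps + / w j)). pose proof (Rmin_r y2 (ps + / w j)).
  unfold actv. fold ps. split; split; lra.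
Qed.

Lemma N_diff_bound a b h v w th y1 y2 z : vpos h v w -> y1 < y2 -> a < z < b ->
  (forall j u, (1 <= j <= h)%nat -> y1 < u < y2 -> actv w th j u -> actv w th j z) ->
  NN h v w th y2 - NN h v w th y1 <= Vsup a b h v w th.
Proof.
  intros Hp Hy Hz HA. eapply Rle_trans; [|apply (V_ge a b h v w th z); auto].
  rewrite NN_diff. unfold Vfun. rewrite !sum1_lsum. apply lsum_le. intros j Hj. apply in_seq1 in Hj.
  destruct (Hp j Hj) as [Hv Hw].
  destruct (Req_dec (clip (w j * y1 + th j)) (clip (w j * y2 + th j))) as [Heq|Hne].
  - rewrite Heq. pose proof (ind_open_range (psi w th j) (psi w th j + / w j) z). pose proof (ind_open_range a b z).
    replace (clip (w j * y2 + th j) - clip (w j * y2 + th j)) with 0 by ring. rewrite Rmult_0_r.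
    apply Rmult_le_pos. lra. apply Rmult_le_pos; lra.
  - destruct (clip_change w th j y1 y2 Hw Hy Hne) as [u [Hu Hau]].
    specialize (HA j u Hj Hu Hau). rewrite ind_open_1 by auto. rewrite ind_open_1 by auto.
    pose proof (clip_range (w j * y1 + th j)). pose proof (clip_range (w j * y2 + th j)). nra.
Qed.

Lemma N_const h v w th y1 y2 : vpos h v w -> y1 < y2 ->
  (forall j u, (1 <= j <= h)%nat -> y1 < u < y2 -> ~ actv w th j u) -> NN h v w th y2 = NN h v w th y1.
Proof.
  intros Hp Hy HA. cut (NN h v w th y2 - NN h v w th y1 = 0). lra.
  rewrite NN_diff. apply lsum_zero. intros j Hj. apply in_seq1 in Hj. destruct (Hp j Hj) as [Hv Hw].
  destruct (Req_dec (clip (w j * y1 + th j)) (clip (w j * y2 + th j))) as [Heq|Hne].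
  rewrite Heq; ring. destruct (clip_change w th j y1 y2 Hw Hy Hne) as [u [Hu Hau]]. exfalso; apply (HA j u Hj Hu Hau).
Qed.

Lemma upper_core a b h v w (f p : R -> R) th x0 : a < b -> vpos h v w -> (forall x, continuous f x) ->
  (forall x, continuous p x) -> (forall x, 0 < p x <-> a < x < b) -> (forall x y, x <= y -> f x <= f y) ->
  Rbar_lt (Lip f a b) (Finite (min_vw h v w)) ->
  (forall i, (1 <= i <= h)%nat -> RInt (EP h v w f p th) (lo_ a b w th i) (hi_ a b w th i) = 0) ->
  a < x0 < b -> 0 < Err h v w f th x0 ->
  Err h v w f th x0 <= Vsup a b h v w th \/
  (Err h v w f th x0 <= Err h v w f th a /\ forall j u, (1 <= j <= h)%nat -> a < u < x0 -> ~ actv w th j u).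
Proof.
  intros Hab Hp Hf Hpc Hpos Hmono HL Hc Hx0 HE.
  destruct (first_hit2 (fun s => (Err h v w f th) (- s)) (- x0) (- a)) as [m [Hm1 [Hm2 Hm3]]].
  { intros x. apply (continuous_comp (fun s => -s) (Err h v w f th)). apply (continuous_opp (fun s : R => s)). apply continuous_id.
    apply Err_cont; auto. }
  lra. rewrite Ropp_involutive. auto.
  set (z := - m). assert (Hz : a <= z < x0) by (unfold z; lra).
  assert (Hz2 : z = a \/ Err h v w f th z <= 0) by (unfold z; destruct Hm2 as [->|]; [left; ring| right; auto]).
  assert (Hz3 : forall y, z < y <= x0 -> 0 < Err h v w f th y).
  { intros y Hy. replace y with (- - y) by ring. apply Hm3. unfold z in Hy. lra. }
  assert (CA : forall j u, (1 <= j <= h)%nat -> z < u < x0 -> actv w th j u -> a < z /\ actv w th j z).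
  { intros j u Hj Hu Hau.
    destruct (exists_nonpos a b h v w f p th j u Hab Hp Hf Hpc Hpos HL Hj (Hc j Hj) ltac:(lra) Hau (Hz3 u ltac:(lra)))
      as [q [Hq1 [Hq2 Hq3]]].
    assert (q <= z). { destruct (Rle_dec q z) as [|Hn]; [auto|]. apply Rnot_le_lt in Hn. assert (z < q <= x0) by lra. pose proof (Hz3 q H). lra. }
    unfold actv in *. split. lra. split; lra. }
  destruct Hz2 as [Hza|Hza].
  - right. rewrite Hza in CA.
    assert (HN : forall j u, (1 <= j <= h)%nat -> a < u < x0 -> ~ actv w th j u).
    { intros j u Hj Hu Hau. destruct (CA j u Hj Hu Hau). lra. }
    split; auto. pose proof (N_const h v w th a x0 Hp ltac:(lra) HN). unfold Err. rewrite H.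
    pose proof (Hmono a x0 ltac:(lra)). lra.
  - left. destruct (Req_dec z a) as [Hza'|Hza'].
    + (* z = a but E a <= 0: then no neuron active either, and Err h v w f th x0 <= E a <= 0, contradiction *)
      rewrite Hza' in CA.
      assert (HN : forall j u, (1 <= j <= h)%nat -> a < u < x0 -> ~ actv w th j u).
      { intros j u Hj Hu Hau. destruct (CA j u Hj Hu Hau). lra. }
      pose proof (N_const h v w th a x0 Hp ltac:(lra) HN). rewrite Hza' in Hza. unfold Err in *.
      pose proof (Hmono a x0 ltac:(lra)). lra.
    + assert (Haz : a < z) by lra.
      pose proof (N_diff_bound a b h v w th z x0 z Hp ltac:(lra) ltac:(lra) ltac:(intros j u Hj Hu Hau; apply (CA j u Hj Hu Hau))).
      pose proof (Hmono z x0 ltac:(lra)). unfold Err in *. lra.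
Qed.

Lemma lower_core a b h v w (f p : R -> R) th x0 : a < b -> vpos h v w -> (forall x, continuous f x) ->
  (forall x, continuous p x) -> (forall x, 0 < p x <-> a < x < b) -> (forall x y, x <= y -> f x <= f y) ->
  Rbar_lt (Lip f a b) (Finite (min_vw h v w)) ->
  (forall i, (1 <= i <= h)%nat -> RInt (EP h v w f p th) (lo_ a b w th i) (hi_ a b w th i) = 0) ->
  a < x0 < b -> Err h v w f th x0 < 0 ->
  - Vsup a b h v w th <= Err h v w f th x0 \/
  (Err h v w f th b <= Err h v w f th x0 /\ forall j u, (1 <= j <= h)%nat -> x0 < u < b -> ~ actv w th j u).
Proof.
  intros Hab Hp Hf Hpc Hpos Hmono HL Hc Hx0 HE.
  destruct (first_hit2 (fun s => - Err h v w f th s) x0 b) as [z [Hm1 [Hm2 Hm3]]].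
  { intros x. apply (continuous_opp (Err h v w f th)). apply Err_cont; auto. }
  lra. lra.
  assert (Hz2 : z = b \/ 0 <= Err h v w f th z) by (destruct Hm2 as [->|]; [left; ring| right; lra]).
  assert (Hz3 : forall y, x0 <= y < z -> Err h v w f th y < 0).
  { intros y Hy. specialize (Hm3 y Hy). simpl in Hm3. lra. }
  assert (CA : forall j u, (1 <= j <= h)%nat -> x0 < u < z -> actv w th j u -> z < b /\ actv w th j z).
  { intros j u Hj Hu Hau.
    destruct (exists_nonneg a b h v w f p th j u Hab Hp Hf Hpc Hpos HL Hj (Hc j Hj) ltac:(lra) Hau (Hz3 u ltac:(lra)))
      as [q [Hq1 [Hq2 Hq3]]].
    assert (z <= q) by (destruct (Rle_dec z q) as [|Hn]; [auto|]; apply Rnot_le_lt in Hn; pose proof (Hz3 q ltac:(lra)); lra).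
    unfold actv in *. split. lra. split; lra. }
  destruct Hz2 as [Hzb|Hzb].
  - right. rewrite Hzb in CA.
    assert (HN : forall j u, (1 <= j <= h)%nat -> x0 < u < b -> ~ actv w th j u).
    { intros j u Hj Hu Hau. destruct (CA j u Hj Hu Hau). lra. }
    split; auto. pose proof (N_const h v w th x0 b Hp ltac:(lra) HN). unfold Err. rewrite H.
    pose proof (Hmono x0 b ltac:(lra)). lra.
  - left. destruct (Req_dec z b) as [Hzb'|Hzb'].
    + rewrite Hzb' in CA.
      assert (HN : forall j u, (1 <= j <= h)%nat -> x0 < u < b -> ~ actv w th j u).
      { intros j u Hj Hu Hau. destruct (CA j u Hj Hu Hau). lra. }
      pose proof (N_const h v w th x0 b Hp ltac:(lra) HN). rewrite Hzb' in Hzb. unfold Err in *.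
      pose proof (Hmono x0 b ltac:(lra)). lra.
    + assert (Hzb2 : z < b) by lra.
      pose proof (N_diff_bound a b h v w th x0 z z Hp ltac:(lra) ltac:(lra) ltac:(intros j u Hj Hu Hau; apply (CA j u Hj Hu Hau))).
      pose proof (Hmono x0 z ltac:(lra)). unfold Err in *. lra.
Qed.

Theorem theorem2p27
  (a b : R) (h : nat) (v w : nat -> R) (f p : R -> R)
  (Theta : R -> nat -> R) (vartheta : nat -> R) :
  a < b ->
  (1 <= h)%nat ->
  (forall i, (1 <= i <= h)%nat -> 0 < v i /\ 0 < w i) ->
  (forall x, continuous f x) ->
  (forall x, continuous p x) ->
  (forall x, 0 <= p x) ->
  (forall x, 0 < p x <-> a < x < b) ->
  (forall x y, x <= y -> f x <= f y) ->
  Rbar_lt (Lip f a b) (Finite (min_vw h v w)) ->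
  (forall j, (1 <= j <= S h)%nat -> forall t, 0 <= t ->
     filterlim (fun s => Theta s j) (within (fun s => 0 <= s) (locally t))
               (locally (Theta t j))) ->
  (forall t, 0 <= t -> forall j, (1 <= j <= S h)%nat ->
     Theta t j = Theta 0 j
       - RInt (fun s => gradLoss a b h v w f p (Theta s) j) 0 t) ->
  is_lim (fun t => dist_h h (Theta t) vartheta) p_infty 0 ->
  Vsup a b h v w vartheta
    < / (RInt p a b)
      * Rmin (RInt (fun x => (f b - f x) * p x) a b)
             (RInt (fun x => (f x - f a) * p x) a b) ->
  sum1 h (fun i => v i * ind_open (a - / (w i)) b (psi w (Theta 0) i))
    > f b - f a + 4 * Vsup a b h v w vartheta ->
  Loss a b h v w f p vartheta
    <= (2 * (Vsup a b h v w vartheta) ^ 2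
        + (f b - f a) * Vsup a b h v w vartheta) * RInt p a b.
Proof.
  intros Hab Hh Hp Hf Hpc Hp0 Hpos Hmono HL HTc HI Hlim _ Hsum.
  assert (Hp' : vpos h v w) by exact Hp. clear Hp. rename Hp' into Hp.
  assert (Hcrit : forall j, (1 <= j <= S h)%nat -> gfor a b h v w f p vartheta j = 0).
  { intros j Hj. apply (critical a b h v w f p Theta vartheta j); auto. }
  assert (Hc1 : RInt (EP h v w f p vartheta) a b = 0).
  { pose proof (Hcrit (S h) ltac:(lia)). unfold gfor in H. rewrite Nat.eqb_refl in H. lra. }
  assert (Hc2 : forall i, (1 <= i <= h)%nat -> RInt (EP h v w f p vartheta) (lo_ a b w vartheta i) (hi_ a b w vartheta i) = 0).
  { intros i Hi. pose proof (Hcrit i ltac:(lia)). unfold gfor in H. destruct (Nat.eqb_spec i (S h)). lia.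
    destruct (Hp i Hi). assert (0 < 2 * v i) by lra.
    apply (Rmult_eq_reg_l (2 * v i)). lra. lra. }
  set (V := Vsup a b h v w vartheta) in *.
  assert (HV0 : 0 <= V) by (apply Vsup_nonneg; auto).
  set (E := Err h v w f vartheta).
  assert (cE : forall x, continuous E x) by (intros; apply Err_cont; auto).
  assert (HD : f a <= f b) by (apply Hmono; lra).
  assert (AB : E a <= V \/ - V <= E b).
  { destruct (Rle_dec (E a) V) as [|Ha]; [left; auto|]. destruct (Rle_dec (- V) (E b)) as [|Hb]; [right; auto|].
    exfalso. apply Rnot_le_lt in Ha. apply Rnot_le_lt in Hb.
    assert (U2 : forall i, (1 <= i <= h)%nat -> ~ (psi w vartheta i < a < psi w vartheta i + / w i)).
    { intros i Hi Hact.
      destruct (eps_of_cont E a (cE a) (E a - V) ltac:(lra)) as [e0 [He0 Hc0]].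
      set (x0 := a + Rmin e0 (Rmin (psi w vartheta i + / w i - a) (b - a)) / 2).
      assert (Hm : 0 < Rmin e0 (Rmin (psi w vartheta i + / w i - a) (b - a))) by (repeat apply Rmin_glb_lt; lra).
      pose proof (Rmin_l e0 (Rmin (psi w vartheta i + / w i - a) (b - a))).
      pose proof (Rmin_r e0 (Rmin (psi w vartheta i + / w i - a) (b - a))).
      pose proof (Rmin_l (psi w vartheta i + / w i - a) (b - a)). pose proof (Rmin_r (psi w vartheta i + / w i - a) (b - a)).
      assert (Hx0 : a < x0 < b) by (unfold x0; lra).
      assert (HEx : V < E x0).
      { assert (Rabs (x0 - a) < e0) by (unfold x0; rewrite Rabs_pos_eq; lra). specialize (Hc0 x0 H3).
        pose proof (Rle_abs (-(E x0 - E a))). rewrite Rabs_Ropp in H4. lra. }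
      destruct (upper_core a b h v w f p vartheta x0 Hab Hp Hf Hpc Hpos Hmono HL Hc2 Hx0 ltac:(unfold E in HEx; lra)) as [Hu|[_ Hu]].
      fold V in Hu. unfold E in HEx. lra.
      apply (Hu i ((a + x0)/2) Hi). lra. unfold actv. unfold x0 in *. split; lra. }
    assert (U2' : forall i, (1 <= i <= h)%nat -> ~ (psi w vartheta i < b < psi w vartheta i + / w i)).
    { intros i Hi Hact.
      destruct (eps_of_cont E b (cE b) (- V - E b) ltac:(lra)) as [e0 [He0 Hc0]].
      set (x0 := b - Rmin e0 (Rmin (b - psi w vartheta i) (b - a)) / 2).
      assert (Hm : 0 < Rmin e0 (Rmin (b - psi w vartheta i) (b - a))) by (repeat apply Rmin_glb_lt; lra).
      pose proof (Rmin_l e0 (Rmin (b - psi w vartheta i) (b - a))).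
      pose proof (Rmin_r e0 (Rmin (b - psi w vartheta i) (b - a))).
      pose proof (Rmin_l (b - psi w vartheta i) (b - a)). pose proof (Rmin_r (b - psi w vartheta i) (b - a)).
      assert (Hx0 : a < x0 < b) by (unfold x0; lra).
      assert (HEx : E x0 < - V).
      { assert (Rabs (x0 - b) < e0) by (unfold x0; rewrite Rabs_left; lra). specialize (Hc0 x0 H3).
        pose proof (Rle_abs (E x0 - E b)). lra. }
      destruct (lower_core a b h v w f p vartheta x0 Hab Hp Hf Hpc Hpos Hmono HL Hc2 Hx0 ltac:(unfold E in HEx; lra)) as [Hu|[_ Hu]].
      fold V in Hu. unfold E in HEx. lra.
      apply (Hu i ((b + x0)/2) Hi). lra. unfold actv. unfold x0 in *. split; lra. }
    assert (Hterm : forall i, (1 <= i <= h)%nat ->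
       v i * ind_open (a - / w i) b (psi w (Theta 0) i) <=
       v i * (clip (w i * b + vartheta i) - clip (w i * a + vartheta i))).
    { intros i Hi. destruct (Hp i Hi) as [Hv Hw]. assert (Hiw : 0 < / w i) by (apply Rinv_0_lt_compat; lra).
      destruct (Classical_Prop.classic (a - / w i < psi w (Theta 0) i < b)) as [Hin|Hout].
      - rewrite ind_open_1 by auto.
        assert (L1 : a - / w i < psi w vartheta i)
          by (apply (no_exit_left a b h v w f p Theta vartheta i); auto; [tauto| unfold E in Ha; lra]).
        assert (R1 : psi w vartheta i < b)
          by (apply (no_exit_right a b h v w f p Theta vartheta i); auto; [tauto| unfold E in Hb; lra]).
        assert (A1 : a <= psi w vartheta i) by (destruct (Rle_dec a (psi w vartheta i)); auto; exfalso; apply (U2 i Hi); lra).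
        assert (A2 : psi w vartheta i + / w i <= b) by (destruct (Rle_dec (psi w vartheta i + / w i) b); auto; exfalso; apply (U2' i Hi); lra).
        rewrite !aff_psi by lra. rewrite clip_1, clip_0. lra.
        assert (w i * (a - psi w vartheta i) <= 0) by nra. lra.
        replace 1 with (w i * / w i) by (field; lra). apply Rmult_le_compat_l; lra.
      - rewrite ind_open_0 by auto. rewrite Rmult_0_r. apply Rmult_le_pos. lra.
        cut (clip (w i * a + vartheta i) <= clip (w i * b + vartheta i)). lra. apply clip_mono. nra. }
    assert (HN : f b - f a + 4 * V < NN h v w vartheta b - NN h v w vartheta a).
    { rewrite NN_diff. eapply Rlt_le_trans. apply Hsum. rewrite !sum1_lsum. apply lsum_le.
      intros i Hi. apply in_seq1 in Hi. apply Hterm; auto. }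
    unfold E, Err in Ha, Hb. lra. }
  set (al := Rmax 0 (E a - V)). set (be := Rmax 0 (- E b - V)).
  assert (Hal : 0 <= al) by apply Rmax_l. assert (Hbe : 0 <= be) by apply Rmax_l.
  assert (Hab0 : al * be = 0).
  { destruct AB as [AB|AB]. unfold al. rewrite Rmax_left by lra. ring. unfold be. rewrite Rmax_left by lra. ring. }
  assert (Hea : E a <= f b - f a).
  { destruct (Classical_Prop.classic (exists x, a < x < b /\ E x <= 0)) as [[x [Hx HEx]]|Hno].
    - pose proof (NN_mono h v w vartheta a x Hp ltac:(lra)). pose proof (Hmono x b ltac:(lra)). unfold E, Err in *. lra.
    - exfalso. assert (0 < RInt (EP h v w f p vartheta) a b). apply (EP_pos_int a b); auto; try lra.
      intros x Hx. destruct (Rlt_dec 0 (Err h v w f vartheta x)); auto. exfalso; apply Hno. exists x. split; auto. unfold E; lra.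
      lra. }
  assert (Heb : - (f b - f a) <= E b).
  { destruct (Classical_Prop.classic (exists x, a < x < b /\ 0 <= E x)) as [[x [Hx HEx]]|Hno].
    - pose proof (NN_mono h v w vartheta x b Hp ltac:(lra)). pose proof (Hmono a x ltac:(lra)). unfold E, Err in *. lra.
    - exfalso. assert (RInt (EP h v w f p vartheta) a b < 0). apply (EP_neg_int a b); auto; try lra.
      intros x Hx. destruct (Rlt_dec (Err h v w f vartheta x) 0); auto. exfalso; apply Hno. exists x. split; auto. unfold E; lra.
      lra. }
  assert (Hsum2 : al + be <= f b - f a).
  { unfold al, be. unfold Rmax. repeat destruct Rle_dec; lra. }
  assert (Hup : forall x, a < x < b -> E x <= V + al).
  { intros x Hx. destruct (Rlt_dec 0 (E x)) as [Hpx|Hnx]; [|lra].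
    destruct (upper_core a b h v w f p vartheta x Hab Hp Hf Hpc Hpos Hmono HL Hc2 Hx Hpx) as [Hu|[Hu _]].
    fold V E in Hu. lra. fold E in Hu. pose proof (Rmax_r 0 (E a - V)). fold al in H. lra. }
  assert (Hlow : forall x, a < x < b -> - (V + be) <= E x).
  { intros x Hx. destruct (Rlt_dec (E x) 0) as [Hpx|Hnx]; [|lra].
    destruct (lower_core a b h v w f p vartheta x Hab Hp Hf Hpc Hpos Hmono HL Hc2 Hx Hpx) as [Hu|[Hu _]].
    fold V E in Hu. lra. fold E in Hu. pose proof (Rmax_r 0 (- E b - V)). fold be in H. lra. }
  set (A := V + al). set (B := V + be).
  assert (HP : 0 <= RInt p a b).
  { rewrite <- (Rmult_0_r (b - a)). apply RInt_ge_const; auto. lra. }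
  unfold Loss.
  apply Rle_trans with (RInt (fun x => (al - be) * EP h v w f p vartheta x + (A * B) * p x) a b).
  { apply RInt_le_R. lra. intros; apply cR_mult; auto. apply cR_pow2. apply cE.
    intros; apply cR_plus; apply cR_mult; try apply cR_const; auto. apply EP_cont; auto.
    intros x Hx. specialize (Hup x Hx). specialize (Hlow x Hx). fold E. unfold EP. fold E.
    change (NN h v w vartheta x - f x) with (E x).
    assert ((E x - A) * (E x + B) <= 0) by (unfold A, B in *; nra).
    assert (E x ^ 2 <= (al - be) * E x + A * B) by (unfold A, B in *; nra).
    pose proof (Hp0 x). nra. }
  assert (cEP : forall x, continuous (EP h v w f p vartheta) x) by (intros; apply EP_cont; auto).
  assert (HRI : RInt (fun x => (al - be) * EP h v w f p vartheta x + (A * B) * p x) a b =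
     (al - be) * RInt (EP h v w f p vartheta) a b + (A * B) * RInt p a b).
  { rewrite RInt_plusR. rewrite RInt_scalR. rewrite RInt_scalR. reflexivity.
    apply exR; auto. apply exR; auto.
    apply exR; intros; apply cR_mult; [apply cR_const| auto].
    apply exR; intros; apply cR_mult; [apply cR_const| auto]. }
  rewrite HRI, Hc1.
  assert (A * B <= 2 * V ^ 2 + (f b - f a) * V).
  { unfold A, B. replace ((V + al) * (V + be)) with (V^2 + V * (al + be) + al * be) by ring. rewrite Hab0.
    assert (V * (al + be) <= V * (f b - f a)) by (apply Rmult_le_compat_l; lra). nra. }
  assert (A * B * RInt p a b <= (2 * V ^ 2 + (f b - f a) * V) * RInt p a b) by (apply Rmult_le_compat_r; auto).
  lra.
Qed.
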